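(* Let $c\in C^\infty(\mathbb{T}^1)$ (complex-valued), $q\in\mathbb{C}$, and $L=\partial_t+c(t)\partial_x+q$ on $\mathbb{T}^1\times\mathbb{R}$. Suppose $f\in(\ker L^t)^0$. Then for every $\xi\in\mathbb{R}$ the ordinary differential equation $$\partial_tw(t)+i(\xi c(t)-iq)w(t)=\widehat f(t,\xi),\qquad t\in\mathbb{T}^1,$$ admits a solution $w\in C^\infty(\mathbb{T}^1)$.
   Context: $\mathbb{T}^1=\mathbb{R}/2\pi\mathbb{Z}$. $\mathcal{S}(\mathbb{T}^1\times\mathbb{R})$ is the space of $f\in C^\infty(\mathbb{T}^1\times\mathbb{R})$ with $\sup_{t,x}|x^\gamma\partial_t^\alpha\partial_x^\beta f(t,x)|<\infty$ for all $\alpha,\beta,\gamma\in\mathbb{N}_0$, $\mathcal{S}'(\mathbb{T}^1\times\mathbb{R})$ its dual. $\widehat f(t,\xi)=\int_{\mathbb{R}}f(t,x)e^{-ix\xi}\,dx$ is the partial Fourier transform in $x$. $L^tv=-\partial_tv-c(t)\partial_xv+qv$ is the transpose of $L$, and $(\ker L^t)^0=\{f\in\mathcal{S}(\mathbb{T}^1\times\mathbb{R}):\langle v,f\rangle=0\text{ for all }v\in\mathcal{S}'(\mathbb{T}^1\times\mathbb{R})\text{ with }L^tv=0\}$. *)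

(* Defs.v *)
From Stdlib Require Import Reals List.
From Coquelicot Require Import Coquelicot.
Set Implicit Arguments.

Local Open Scope R_scope.

Definition reC (z : C) : R := fst z.
Definition imC (z : C) : R := snd z.

Definition smooth1 (g : R -> R) : Prop := forall (n : nat) (t : R), ex_derive_n g n t.

Definition periodic1 (g : R -> C) : Prop := forall t : R, g (t + 2 * PI) = g t.

Definition Cinf_T1 (g : R -> C) : Prop :=
  periodic1 g /\ smooth1 (fun t => reC (g t)) /\ smooth1 (fun t => imC (g t)).

Definition Cderive (g : R -> C) (t : R) : C :=
  (Derive (fun s => reC (g s)) t, Derive (fun s => imC (g s)) t).

Definition Dt (f : R -> R -> R) : R -> R -> R := fun t x => Derive (fun s => f s x) t.
Definition Dx (f : R -> R -> R) : R -> R -> R := fun t x => Derive (fun y => f t y) x.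

(* iterated partial derivatives along a word (true = d/dt, false = d/dx),
   the head of the list being applied last *)
Fixpoint Dword (w : list bool) (f : R -> R -> R) : R -> R -> R :=
  match w with
  | nil => f
  | b :: w' => if b then Dt (Dword w' f) else Dx (Dword w' f)
  end.

Definition jointly_continuous (f : R -> R -> R) : Prop :=
  forall t x : R,
    filterlim (fun p : R * R => f (fst p) (snd p)) (locally (t, x)) (locally (f t x)).

Definition smooth2 (f : R -> R -> R) : Prop :=
  forall w : list bool,
    jointly_continuous (Dword w f) /\
    (forall t x : R, ex_derive (fun s => Dword w f s x) t) /\
    (forall t x : R, ex_derive (fun y => Dword w f t y) x).

Definition periodic2 (f : R -> R -> C) : Prop :=
  forall t x : R, f (t + 2 * PI) x = f t x.

Definition DtxC (a b : nat) (f : R -> R -> C) : R -> R -> C :=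
  fun t x =>
    (Dword (repeat true a ++ repeat false b) (fun s y => reC (f s y)) t x,
     Dword (repeat true a ++ repeat false b) (fun s y => imC (f s y)) t x).

Definition Schwartz (f : R -> R -> C) : Prop :=
  periodic2 f /\
  smooth2 (fun t x => reC (f t x)) /\ smooth2 (fun t x => imC (f t x)) /\
  forall a b g : nat, exists M : R, forall t x : R,
    Rabs (x ^ g) * Cmod (DtxC a b f t x) <= M.

(* the continuous dual S'(T^1 x R): linear functionals on S bounded by finitely
   many of the defining seminorms  sup_{t,x} |x^g d_t^a d_x^b f| *)
Definition linear_on_S (v : (R -> R -> C) -> C) : Prop :=
  forall (f g : R -> R -> C) (a b : C), Schwartz f -> Schwartz g ->
    v (fun t x => (a * f t x + b * g t x)%C) = (a * v f + b * v g)%C.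

Definition continuous_on_S (v : (R -> R -> C) -> C) : Prop :=
  exists (N : nat) (K : R), forall (f : R -> R -> C) (M : R), Schwartz f ->
    (forall a b g : nat, (a <= N)%nat -> (b <= N)%nat -> (g <= N)%nat ->
       forall t x : R, Rabs (x ^ g) * Cmod (DtxC a b f t x) <= M) ->
    Cmod (v f) <= K * M.

Definition tempered (v : (R -> R -> C) -> C) : Prop :=
  linear_on_S v /\ continuous_on_S v.

Definition Lop (c : R -> C) (q : C) (f : R -> R -> C) : R -> R -> C :=
  fun t x => (DtxC 1 0 f t x + c t * DtxC 0 1 f t x + q * f t x)%C.

(* L^t v = 0 in the sense of distributions: <L^t v, phi> = <v, L phi> = 0 *)
Definition in_ker_Lt (c : R -> C) (q : C) (v : (R -> R -> C) -> C) : Prop :=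
  forall phi : R -> R -> C, Schwartz phi -> v (Lop c q phi) = 0%C.

Definition annihilator_ker_Lt (c : R -> C) (q : C) (f : R -> R -> C) : Prop :=
  Schwartz f /\
  forall v : (R -> R -> C) -> C, tempered v -> in_ker_Lt c q v -> v f = 0%C.

Definition fourier_x (f : R -> R -> C) (t xi : R) : C :=
  @RInt_gen C_R_CompleteNormedModule
    (fun x => Cmult (f t x) (cos (x * xi), - sin (x * xi)))
    (Rbar_locally m_infty) (Rbar_locally p_infty).

(* Main.v *)
Require Import Defs.
From Stdlib Require Import Reals Lra Lia List.
From Coquelicot Require Import Coquelicot.
Local Open Scope R_scope.


Lemma Derive_n_Sc (f : R -> R) m x : Derive_n (Derive f) m x = Derive_n f (S m) x.
Proof.
  change (Derive_n (Derive_n f 1) m x = Derive_n f (S m) x).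
  rewrite Derive_n_comp. f_equal. lia.
Qed.

Lemma exdn_S_Derive f n x : ex_derive_n f (S n) x -> ex_derive_n (Derive f) n x.
Proof.
  destruct n; simpl; auto. intro H.
  apply ex_derive_ext with (f := Derive_n f (S n)); auto.
  intro; symmetry; apply Derive_n_Sc.
Qed.

Lemma exdn_Derive_S f n x : (forall y, ex_derive f y) -> ex_derive_n (Derive f) n x -> ex_derive_n f (S n) x.
Proof.
  destruct n; simpl; auto. intros _ H.
  apply ex_derive_ext with (f := Derive_n (Derive f) n); auto.
  intro; apply Derive_n_Sc.
Qed.

Definition upto (f : R -> R) n := forall k, (k <= n)%nat -> forall t, ex_derive_n f k t.

Lemma upto_smooth f : smooth1 f <-> forall n, upto f n.
Proof. split; intros H. intros n k _ t; apply H. intros n t; apply (H n n (le_n n)). Qed.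

Lemma upto_le f n m : (m <= n)%nat -> upto f n -> upto f m.
Proof. intros Hm H k Hk; apply H; lia. Qed.

Lemma upto_plus f g n : upto f n -> upto g n -> upto (fun x => f x + g x) n.
Proof.
  intros Hf Hg k Hk t. apply ex_derive_n_plus; apply filter_forall; intros y j Hj; [apply Hf|apply Hg]; lia.
Qed.

Lemma upto_ext f g n : (forall t, f t = g t) -> upto f n -> upto g n.
Proof. intros E H k Hk t. apply ex_derive_n_ext with f; auto. Qed.

Lemma upto_derive f n : upto f (S n) -> upto (Derive f) n.
Proof. intros H k Hk t. apply exdn_S_Derive. apply H. lia. Qed.

Lemma upto_S f n : (forall y, ex_derive f y) -> upto (Derive f) n -> upto f (S n).
Proof.
  intros Hd H k Hk t. destruct k. simpl; auto.
  apply exdn_Derive_S; auto. apply H; lia.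
Qed.

Lemma ex_derive_upto f n t : upto f (S n) -> ex_derive f t.
Proof. intros H. apply (H 1%nat). lia. Qed.

Lemma upto_mult n : forall f g, upto f n -> upto g n -> upto (fun x => f x * g x) n.
Proof.
  induction n; intros f g Hf Hg.
  - intros k Hk t. replace k with 0%nat by lia. simpl; auto.
  - apply upto_S.
    + intro y. apply ex_derive_mult; eapply ex_derive_upto; eauto.
    + apply upto_ext with (fun x => Derive f x * g x + f x * Derive g x).
      * intro t. rewrite Derive_mult. reflexivity. eapply ex_derive_upto; eauto. eapply ex_derive_upto; eauto.
      * apply upto_plus; apply IHn.
        apply upto_derive; auto. apply upto_le with (S n); auto.
        apply upto_le with (S n); auto. apply upto_derive; auto.
Qed.

Lemma upto_const a n : upto (fun _ => a) n.
Proof. intros k _ t; apply ex_derive_n_const. Qed.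

Lemma smooth_plus f g : smooth1 f -> smooth1 g -> smooth1 (fun x => f x + g x).
Proof. rewrite !upto_smooth. intros; apply upto_plus; auto. Qed.
Lemma smooth_mult f g : smooth1 f -> smooth1 g -> smooth1 (fun x => f x * g x).
Proof. rewrite !upto_smooth. intros; apply upto_mult; auto. Qed.
Lemma smooth_const a : smooth1 (fun _ => a).
Proof. rewrite upto_smooth. intros; apply upto_const. Qed.
Lemma smooth_ext f g : (forall t, f t = g t) -> smooth1 f -> smooth1 g.
Proof. rewrite !upto_smooth. intros E H n; apply upto_ext with f; auto. Qed.
Lemma smooth_ex_derive f t : smooth1 f -> ex_derive f t.
Proof. intro H; apply (H 1%nat). Qed.
Lemma smooth_cont f t : smooth1 f -> continuous f t.
Proof. intro H; apply (@ex_derive_continuous R_AbsRing R_NormedModule), smooth_ex_derive; auto. Qed.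
Lemma smooth_Derive f : smooth1 f -> smooth1 (Derive f).
Proof. rewrite !upto_smooth. intros H n; apply upto_derive; auto. Qed.
Lemma smooth_of_Derive f : (forall t, ex_derive f t) -> smooth1 (Derive f) -> smooth1 f.
Proof.
  rewrite !upto_smooth. intros Hd H n. apply upto_le with (S n); auto. apply upto_S; auto.
Qed.
Lemma smooth_minus f g : smooth1 f -> smooth1 g -> smooth1 (fun x => f x - g x).
Proof.
  intros Hf Hg. apply smooth_ext with (fun x => f x + (-1) * g x). intro; ring.
  apply smooth_plus; auto. apply smooth_mult; auto. apply smooth_const.
Qed.

Lemma boot2 (u1 u2 b1 b2 a11 a12 a21 a22 : R -> R) :
  smooth1 b1 -> smooth1 b2 -> smooth1 a11 -> smooth1 a12 -> smooth1 a21 -> smooth1 a22 ->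
  (forall t, is_derive u1 t (b1 t + a11 t * u1 t + a12 t * u2 t)) ->
  (forall t, is_derive u2 t (b2 t + a21 t * u1 t + a22 t * u2 t)) ->
  smooth1 u1 /\ smooth1 u2.
Proof.
  rewrite !upto_smooth. intros Hb1 Hb2 H11 H12 H21 H22 D1 D2.
  assert (forall n, upto u1 n /\ upto u2 n).
  { induction n.
    - split; intros k Hk t; replace k with 0%nat by lia; simpl; auto.
    - destruct IHn as [I1 I2]. split; apply upto_S.
      + intro y; eexists; apply D1.
      + apply upto_ext with (fun t => b1 t + a11 t * u1 t + a12 t * u2 t).
        intro t; symmetry; apply is_derive_unique, D1.
        apply upto_plus; [apply upto_plus|]; [|apply upto_mult..]; auto.
      + intro y; eexists; apply D2.
      + apply upto_ext with (fun t => b2 t + a21 t * u1 t + a22 t * u2 t).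
        intro t; symmetry; apply is_derive_unique, D2.
        apply upto_plus; [apply upto_plus|]; [|apply upto_mult..]; auto. }
  split; intro n; apply H.
Qed.


Lemma ball_R (x e y : R) : ball x e y <-> Rabs (y - x) < e.
Proof. unfold ball; simpl; unfold AbsRing_ball, abs, minus, plus, opp; simpl. tauto. Qed.

Lemma cont_eps (k : R -> R) x : continuous k x ->
  forall eps : posreal, exists d : posreal, forall y, Rabs (y - x) < d -> Rabs (k y - k x) < eps.
Proof.
  intros H eps. apply filterlim_locally with (eps := eps) in H.
  destruct H as [d Hd]. exists d. intros y Hy. apply ball_R. apply Hd. apply ball_R. auto.
Qed.

Lemma eps_cont (k : R -> R) x :
  (forall eps : posreal, exists d : posreal, forall y, Rabs (y - x) < d -> Rabs (k y - k x) < eps) ->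
  continuous k x.
Proof.
  intros H. apply filterlim_locally. intro eps. destruct (H eps) as [d Hd].
  exists d. intros y Hy. apply ball_R. apply Hd. apply ball_R. auto.
Qed.

Lemma cont2_snd (G : R -> R -> R) t u : continuity_2d_pt G t u -> continuous (G t) u.
Proof.
  intros H. apply eps_cont. intro eps. destruct (H eps) as [d Hd]. exists d.
  intros y Hy. apply Hd; auto. rewrite Rminus_eq_0, Rabs_R0. apply cond_pos.
Qed.

Lemma cont2_fst (G : R -> R -> R) t u : continuity_2d_pt G t u -> continuous (fun s => G s u) t.
Proof.
  intros H. apply eps_cont. intro eps. destruct (H eps) as [d Hd]. exists d.
  intros y Hy. apply Hd; auto. rewrite Rminus_eq_0, Rabs_R0. apply cond_pos.
Qed.

Lemma cont_2d_of_1d (h : R -> R) t u : continuous h u -> continuity_2d_pt (fun _ x => h x) t u.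
Proof.
  intros H. apply continuity_1d_2d_pt_comp with (g := fun _ v => v).
  apply continuity_pt_filterlim; auto. apply continuity_2d_pt_id2.
Qed.

Lemma comp_snd (H : R -> R -> R) (phi : R -> R) t0 u0 :
  continuity_2d_pt H t0 (phi u0) -> continuous phi u0 ->
  continuity_2d_pt (fun t u => H t (phi u)) t0 u0.
Proof.
  intros HH Hp eps. destruct (HH eps) as [d1 Hd1].
  destruct (cont_eps phi u0 Hp d1) as [d2 Hd2].
  assert (Hm : 0 < Rmin d1 d2) by (apply Rmin_pos; apply cond_pos).
  exists (mkposreal _ Hm). simpl. intros s v Hs Hv.
  apply Hd1. apply Rlt_le_trans with (1 := Hs), Rmin_l.
  apply Hd2. apply Rlt_le_trans with (1 := Hv), Rmin_r.
Qed.

Definition gt (h : R -> R) (u : R) : R :=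
  if Rlt_dec (Rabs u) (PI / 2) then h (tan u) * (1 + tan u ^ 2) else 0.

Definition TI (h : R -> R) : R := RInt (gt h) (- (PI / 2)) (PI / 2).

Definition Decay (h : R -> R) (M : R) := forall x, Rabs (h x) * (1 + x ^ 2) ^ 2 <= M.

Lemma TI_ext h h' : (forall x, h x = h' x) -> TI h = TI h'.
Proof.
  intros E. unfold TI. apply RInt_ext. intros x _. unfold gt. destruct Rlt_dec; auto. rewrite E; auto.
Qed.

Lemma Decay_nonneg h M : Decay h M -> 0 <= M.
Proof. intros H. eapply Rle_trans, (H 0). apply Rmult_le_pos. apply Rabs_pos. apply pow_le. nra. Qed.

Lemma abs_in u : Rabs u < PI / 2 -> - (PI / 2) < u < PI / 2.
Proof. intros H. split; [apply Ropp_lt_cancel; rewrite Ropp_involutive|];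
  eapply Rle_lt_trans; try apply H; [rewrite <- Rabs_Ropp|]; apply Rle_abs. Qed.

Lemma cos_pos_in u : Rabs u < PI / 2 -> 0 < cos u.
Proof. intros H; apply abs_in in H; apply cos_gt_0; lra. Qed.

Lemma tan_sq u : cos u <> 0 -> 1 + tan u ^ 2 = / (cos u ^ 2).
Proof.
  intros H. unfold tan. pose proof (sin2_cos2 u) as E. unfold Rsqr in E.
  transitivity ((sin u * sin u + cos u * cos u) / cos u ^ 2). field; auto.
  rewrite E. field; auto.
Qed.

Lemma gt_bound h M u : Decay h M -> Rabs (gt h u) <= M * (cos u) ^ 2.
Proof.
  intros H. pose proof (Decay_nonneg _ _ H) as M0. unfold gt. destruct Rlt_dec as [r|r].
  - pose proof (cos_pos_in _ r) as C. specialize (H (tan u)).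
    rewrite tan_sq in H |- * by lra.
    set (k := / cos u ^ 2) in *.
    assert (K : 0 < k) by (unfold k; apply Rinv_0_lt_compat; apply pow_lt; lra).
    assert (Ek : cos u ^ 2 = / k) by (unfold k; rewrite Rinv_inv; auto).
    rewrite Ek. rewrite Rabs_mult, (Rabs_pos_eq k) by lra.
    apply Rmult_le_reg_r with k; auto. replace (M * / k * k) with M by (field; lra).
    replace (Rabs (h (tan u)) * k * k) with (Rabs (h (tan u)) * k ^ 2) by ring. lra.
  - rewrite Rabs_R0. apply Rmult_le_pos; auto. apply pow2_ge_0.
Qed.

Lemma cont_tan u : Rabs u < PI / 2 -> continuous tan u.
Proof.
  intros H. apply (@ex_derive_continuous R_AbsRing R_NormedModule).
  eexists. apply is_derive_tan. pose proof (cos_pos_in _ H); lra.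
Qed.

Lemma cont_tan2 u : Rabs u < PI / 2 -> continuous (fun v => 1 + tan v ^ 2) u.
Proof.
  intros H. apply (@ex_derive_continuous R_AbsRing R_NormedModule).
  auto_derive. eexists. apply is_derive_tan. pose proof (cos_pos_in _ H); lra.
Qed.

Lemma cont_cos2 (M : R) u : continuous (fun v => M * cos v ^ 2) u.
Proof. apply (@ex_derive_continuous R_AbsRing R_NormedModule). auto_derive. auto. Qed.

Lemma gt_cont2 (H : R -> R -> R) M :
  (forall t x, continuity_2d_pt H t x) -> (forall t, Decay (H t) M) ->
  forall t u, continuity_2d_pt (fun t u => gt (H t) u) t u.
Proof.
  intros HC HD t0 u0.
  destruct (Rlt_dec (Rabs u0) (PI / 2)) as [r|r].
  - assert (dpos : 0 < PI / 2 - Rabs u0) by lra.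
    apply continuity_2d_pt_ext_loc with (fun s v => H s (tan v) * (1 + tan v ^ 2)).
    + exists (mkposreal _ dpos). simpl. intros s v _ Hv. unfold gt.
      destruct Rlt_dec as [r'|r']; auto. exfalso; apply r'.
      pose proof (Rabs_triang_inv v u0). lra.
    + apply continuity_2d_pt_mult.
      * apply comp_snd; auto. apply cont_tan; auto.
      * apply continuity_1d_2d_pt_comp with (f := fun v => 1 + tan v ^ 2) (g := fun _ v => v).
        apply continuity_pt_filterlim. apply cont_tan2; auto. apply continuity_2d_pt_id2.
  - destruct (Rle_lt_or_eq_dec (PI / 2) (Rabs u0)) as [r2|r2]; [lra| |].
    + assert (dpos : 0 < Rabs u0 - PI / 2) by lra.
      apply continuity_2d_pt_ext_loc with (fun _ _ => 0).
      * exists (mkposreal _ dpos). simpl. intros s v _ Hv. unfold gt.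
        destruct Rlt_dec as [r'|r']; auto. exfalso.
        pose proof (Rabs_triang_inv u0 v). rewrite <- Rabs_Ropp in Hv.
        replace (- (v - u0)) with (u0 - v) in Hv by ring. lra.
      * apply continuity_2d_pt_const.
    + intros eps. assert (c0 : cos u0 = 0).
      { destruct (Rcase_abs u0) as [n|n].
        - rewrite Rabs_left in r2 by auto. replace u0 with (- (PI / 2)) by lra. rewrite cos_neg; apply cos_PI2.
        - rewrite Rabs_right in r2 by auto. rewrite <- r2. apply cos_PI2. }
      destruct (cont_eps _ _ (cont_cos2 M u0) eps) as [d Hd].
      exists d. intros s v _ Hv. specialize (Hd v Hv). rewrite c0 in Hd.
      unfold gt at 2. destruct Rlt_dec; [lra|]. rewrite Rminus_0_r.
      eapply Rle_lt_trans. apply gt_bound, HD.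
      replace (M * 0 ^ 2) with 0 in Hd by ring. rewrite Rminus_0_r in Hd.
      eapply Rle_lt_trans, Hd. apply Rle_abs.
Qed.

Lemma gt_cont h M : (forall x, continuous h x) -> Decay h M -> forall u, continuous (gt h) u.
Proof.
  intros HC HD u.
  apply (cont2_snd (fun _ u => gt h u) 0 u).
  apply (gt_cont2 (fun _ x => h x) M); auto.
  intros; apply cont_2d_of_1d; auto.
Qed.


Lemma gen_from_fin {V : NormedModule R_AbsRing} (f : R -> V) Fa Fb {FFa : Filter Fa} {FFb : Filter Fb}
  (G : R -> R -> V) l :
  (forall a b, is_RInt f a b (G a b)) ->
  filterlim (fun ab => G (fst ab) (snd ab)) (filter_prod Fa Fb) (locally l) ->
  is_RInt_gen f Fa Fb l.
Proof.
  intros HG HL P HP. unfold filtermapi. specialize (HL P HP).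
  eapply filter_imp, HL. intros ab H. exists (G (fst ab) (snd ab)). auto.
Qed.

Lemma atan_pinfty : filterlim atan (Rbar_locally p_infty) (locally (PI / 2)).
Proof.
  apply filterlim_locally. intro eps.
  pose proof PI_RGT_0 as HP.
  set (d := Rmin (eps / 2) (PI / 4)).
  assert (d0 : 0 < d) by (unfold d; apply Rmin_pos; [pose proof (cond_pos eps)|]; lra).
  assert (d1 : d <= PI / 4) by apply Rmin_r.
  assert (d2 : d <= eps / 2) by apply Rmin_l.
  exists (tan (PI / 2 - d)). intros x Hx.
  apply ball_R. apply atan_increasing in Hx. rewrite atan_tan in Hx by lra.
  pose proof (atan_bound x). rewrite Rabs_left by lra. lra.
Qed.

Lemma atan_minfty : filterlim atan (Rbar_locally m_infty) (locally (- (PI / 2))).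
Proof.
  apply filterlim_locally. intro eps.
  pose proof PI_RGT_0 as HP.
  set (d := Rmin (eps / 2) (PI / 4)).
  assert (d0 : 0 < d) by (unfold d; apply Rmin_pos; [pose proof (cond_pos eps)|]; lra).
  assert (d1 : d <= PI / 4) by apply Rmin_r.
  assert (d2 : d <= eps / 2) by apply Rmin_l.
  exists (tan (- (PI / 2) + d)). intros x Hx.
  apply ball_R. apply atan_increasing in Hx. rewrite atan_tan in Hx by lra.
  pose proof (atan_bound x). rewrite Rabs_right by lra. lra.
Qed.

Lemma exR_cont (f : R -> R) a b : (forall z, Rmin a b <= z <= Rmax a b -> continuous f z) -> ex_RInt f a b.
Proof. apply (@ex_RInt_continuous R_CompleteNormedModule). Qed.

Lemma ex_RInt_gt h M : (forall x, continuous h x) -> Decay h M -> forall a b, ex_RInt (gt h) a b.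
Proof. intros HC HD a b. apply exR_cont. intros; eapply gt_cont; eauto. Qed.

Lemma fin_gt h M : (forall x, continuous h x) -> Decay h M ->
  forall a b, RInt h a b = RInt (gt h) (atan a) (atan b).
Proof.
  intros HC HD a b.
  rewrite <- (tan_atan a) at 1. rewrite <- (tan_atan b) at 1.
  rewrite <- (RInt_comp h tan (fun u => tan u ^ 2 + 1)).
  - apply RInt_ext. intros x Hx. unfold gt. destruct Rlt_dec as [r|r].
    + unfold scal; simpl; unfold mult; simpl. ring.
    + exfalso. apply r. pose proof (atan_bound a); pose proof (atan_bound b).
      assert (Rmin (atan a) (atan b) > - (PI/2)) by (apply Rmin_glb_lt; lra).
      assert (Rmax (atan a) (atan b) < PI/2) by (apply Rmax_lub_lt; lra).
      apply Rabs_def1; lra.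
  - intros; auto.
  - intros x Hx. assert (Rabs x < PI / 2).
    { pose proof (atan_bound a); pose proof (atan_bound b).
      assert (Rmin (atan a) (atan b) > - (PI/2)) by (apply Rmin_glb_lt; lra).
      assert (Rmax (atan a) (atan b) < PI/2) by (apply Rmax_lub_lt; lra).
      apply Rabs_def1; lra. }
    split. apply is_derive_tan. pose proof (cos_pos_in _ H); lra.
    eapply continuous_ext, cont_tan2; eauto. intros; simpl; ring.
Qed.

Theorem IG h M : (forall x, continuous h x) -> Decay h M ->
  is_RInt_gen h (Rbar_locally m_infty) (Rbar_locally p_infty) (TI h).
Proof.
  intros HC HD.
  set (P := fun y => (RInt (gt h) 0 y : R)).
  assert (EX := ex_RInt_gt h M HC HD).
  assert (PC : forall y, continuous P y).
  { intro y. apply (@ex_derive_continuous R_AbsRing R_NormedModule). eexists.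
    apply (is_derive_RInt (gt h) P 0 y). apply filter_forall. intro; apply (@RInt_correct R_CompleteNormedModule); auto.
    eapply gt_cont; eauto. }
  apply gen_from_fin with (G := fun a b => P (atan b) - P (atan a)); [apply Rbar_locally_filter|apply Rbar_locally_filter| |].
  - intros a b. replace (P (atan b) - P (atan a)) with (RInt h a b).
    apply (@RInt_correct R_CompleteNormedModule). apply exR_cont; auto.
    rewrite (fin_gt h M HC HD). unfold P.
    rewrite <- (RInt_Chasles (gt h) 0 (atan a) (atan b)) by auto.
    unfold plus; simpl. assert (AA : forall u v : R, v = u + v - u) by (intros; ring). apply AA.
  - replace (TI h) with (plus (P (PI / 2)) (opp (P (- (PI / 2))))).
    + apply (filterlim_comp_2 (G := locally (P (PI / 2))) (H := locally (opp (P (- (PI / 2))))) (fun ab : R * R => P (atan (snd ab))) (fun ab : R * R => opp (P (atan (fst ab)))) plus).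
      * apply (filterlim_comp _ _ _ snd (fun y => P (atan y)) _ (Rbar_locally p_infty)). apply filterlim_snd.
        apply (filterlim_comp _ _ _ atan P _ (locally (PI / 2))). apply atan_pinfty. apply PC.
      * apply (filterlim_comp _ _ _ fst (fun y => opp (P (atan y))) _ (Rbar_locally m_infty)). apply filterlim_fst.
        apply (filterlim_comp _ _ _ atan (fun y => opp (P y)) _ (locally (- (PI / 2)))). apply atan_minfty.
        apply (filterlim_comp _ _ _ P opp _ (locally (P (- (PI / 2))))). apply PC. apply (filterlim_opp (K := R_AbsRing) (V := R_NormedModule)).
      * apply (filterlim_plus (K := R_AbsRing) (V := R_NormedModule)).
    + unfold TI, P. rewrite <- (RInt_Chasles (gt h) (- (PI / 2)) 0 (PI / 2)) by auto.
      rewrite <- (opp_RInt_swap (gt h) 0 (- (PI / 2))) by auto.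
      unfold plus, opp; simpl. ring.
Qed.


Lemma contR_plus (f g : R -> R) x : continuous f x -> continuous g x -> continuous (fun y => f y + g y) x.
Proof. intros; apply (continuous_plus (V := R_NormedModule)); auto. Qed.
Lemma contR_mult (f g : R -> R) x : continuous f x -> continuous g x -> continuous (fun y => f y * g y) x.
Proof. intros; apply (continuous_mult (K := R_AbsRing)); auto. Qed.
Lemma contR_const (c : R) x : continuous (fun _ : R => c) x.
Proof. apply continuous_const. Qed.
Lemma contR_cos_lin (a : R) x : continuous (fun y => cos (y * a)) x.
Proof. apply (@ex_derive_continuous R_AbsRing R_NormedModule). auto_derive; auto. Qed.
Lemma contR_sin_lin (a : R) x : continuous (fun y => sin (y * a)) x.
Proof. apply (@ex_derive_continuous R_AbsRing R_NormedModule). auto_derive; auto. Qed.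
Lemma contR_ext (f g : R -> R) x : (forall y, f y = g y) -> continuous f x -> continuous g x.
Proof. intros; eapply continuous_ext; eauto. Qed.

Definition DecayC (k : R -> R) := (forall x, continuous k x) /\ exists M, Decay k M.

Lemma DecayC_plus a b : DecayC a -> DecayC b -> DecayC (fun x => a x + b x).
Proof.
  intros [Ca [Ma Ha]] [Cb [Mb Hb]]. split. intros; apply contR_plus; auto.
  exists (Ma + Mb). intro x. specialize (Ha x); specialize (Hb x).
  assert (0 <= (1 + x ^ 2) ^ 2) by (apply pow_le; nra).
  pose proof (Rabs_triang (a x) (b x)). nra.
Qed.

Lemma DecayC_mulb a p : DecayC a -> (forall x, continuous p x) -> (forall x, Rabs (p x) <= 1) ->
  DecayC (fun x => a x * p x).
Proof.
  intros [Ca [Ma Ha]] Cp Bp. split. intros; apply contR_mult; auto.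
  exists Ma. intro x. specialize (Ha x); specialize (Bp x).
  assert (0 <= (1 + x ^ 2) ^ 2) by (apply pow_le; nra).
  rewrite Rabs_mult. pose proof (Rabs_pos (a x)). pose proof (Rabs_pos (p x)).
  assert (0 <= Rabs (a x) * (1 + x ^ 2) ^ 2 * (1 - Rabs (p x))) by (apply Rmult_le_pos; [apply Rmult_le_pos|]; lra).
  nra.
Qed.

Lemma DecayC_scal (c : R) a : DecayC a -> DecayC (fun x => c * a x).
Proof.
  intros [Ca [Ma Ha]]. split. intros; apply contR_mult; auto. apply contR_const.
  exists (Rabs c * Ma). intro x. specialize (Ha x). rewrite Rabs_mult.
  pose proof (Rabs_pos c). nra.
Qed.

Lemma DecayC_ext a b : (forall x, a x = b x) -> DecayC a -> DecayC b.
Proof.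
  intros E [Ca [Ma Ha]]. split. intros; eapply contR_ext; eauto.
  exists Ma. intro x. rewrite <- E. auto.
Qed.

Definition hre (g : R -> C) (xi : R) (x : R) : R := fst (g x) * cos (x * xi) + snd (g x) * sin (x * xi).
Definition him (g : R -> C) (xi : R) (x : R) : R := snd (g x) * cos (x * xi) - fst (g x) * sin (x * xi).

Lemma DecayC_hre g xi : DecayC (fun x => fst (g x)) -> DecayC (fun x => snd (g x)) -> DecayC (hre g xi).
Proof.
  intros H1 H2. apply DecayC_plus; apply DecayC_mulb; auto;
  try (intros; apply contR_cos_lin); try (intros; apply contR_sin_lin);
  intros; apply Rabs_le; [apply COS_bound|apply SIN_bound].
Qed.

Lemma DecayC_him g xi : DecayC (fun x => fst (g x)) -> DecayC (fun x => snd (g x)) -> DecayC (him g xi).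
Proof.
  intros H1 H2. apply DecayC_ext with (fun x => snd (g x) * cos (x * xi) + (-1) * (fst (g x) * sin (x * xi))).
  intros; unfold him; ring.
  apply DecayC_plus; [|apply DecayC_scal]; apply DecayC_mulb; auto;
  try (intros; apply contR_cos_lin); try (intros; apply contR_sin_lin);
  intros; apply Rabs_le; [apply COS_bound|apply SIN_bound].
Qed.

Lemma IGD k : DecayC k -> is_RInt_gen k (Rbar_locally m_infty) (Rbar_locally p_infty) (TI k).
Proof. intros [C [M D]]. eapply IG; eauto. Qed.

Lemma is_RInt_pairC (g : R -> C) a b l1 l2 : is_RInt (fun x => fst (g x)) a b l1 ->
  is_RInt (fun x => snd (g x)) a b l2 -> @is_RInt C_R_NormedModule g a b (l1, l2).
Proof. intros. apply (is_RInt_fct_extend_pair (U:=R_NormedModule) (V:=R_NormedModule)); auto. Qed.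

Lemma is_RInt_gen_pairC (g : R -> C) Fa Fb {FFa : Filter Fa} {FFb : Filter Fb} l1 l2 :
  is_RInt_gen (fun x => fst (g x)) Fa Fb l1 -> is_RInt_gen (fun x => snd (g x)) Fa Fb l2 ->
  @is_RInt_gen C_R_NormedModule g Fa Fb (l1, l2).
Proof.
  intros H1 H2 P [eps HP].
  specialize (H1 (ball l1 eps) (locally_ball l1 eps)).
  specialize (H2 (ball l2 eps) (locally_ball l2 eps)).
  unfold filtermapi in *. generalize (filter_and _ _ H1 H2).
  apply filter_imp. intros ab [[y1 [I1 B1]] [y2 [I2 B2]]].
  exists (y1, y2). split. apply is_RInt_pairC; auto.
  apply HP. split; auto.
Qed.

Lemma fourier_val (g : R -> R -> C) t xi :
  DecayC (fun x => fst (g t x)) -> DecayC (fun x => snd (g t x)) ->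
  fourier_x g t xi = (TI (hre (g t) xi), TI (him (g t) xi)).
Proof.
  intros H1 H2. unfold fourier_x.
  apply (is_RInt_gen_unique (V := C_R_CompleteNormedModule)); try (apply Proper_StrongProper, Rbar_locally_filter).
  apply is_RInt_gen_pairC; try apply Rbar_locally_filter.
  - apply is_RInt_gen_ext with (hre (g t) xi); try apply Rbar_locally_filter.
    apply filter_forall. intros ab x _. unfold hre; simpl. ring.
    apply IGD. apply DecayC_hre; auto.
  - apply is_RInt_gen_ext with (him (g t) xi); try apply Rbar_locally_filter.
    apply filter_forall. intros ab x _. unfold him; simpl. ring.
    apply IGD. apply DecayC_him; auto.
Qed.


Definition Nice2 (H : R -> R -> R) := (forall t x, continuity_2d_pt H t x) /\ exists M, forall t, Decay (H t) M.

Lemma Nice2_DecayC H t : Nice2 H -> DecayC (H t).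
Proof. intros [C [M D]]. split; [intros; apply cont2_snd; auto|exists M; auto]. Qed.

Lemma Derive_gt (H : R -> R -> R) s v : Derive (fun z => gt (H z) v) s = gt (Dt H s) v.
Proof.
  unfold gt, Dt. destruct Rlt_dec.
  - rewrite Rmult_comm, <- Derive_scal. apply Derive_ext. intros; ring.
  - apply Derive_const.
Qed.

Lemma TI_deriv H : Nice2 H -> Nice2 (Dt H) -> (forall t x, ex_derive (fun s => H s x) t) ->
  forall t, is_derive (fun t => TI (H t)) t (TI (Dt H t)).
Proof.
  intros N1 N2 HD t. unfold TI.
  replace (RInt (gt (Dt H t)) (- (PI / 2)) (PI / 2)) with
     (RInt (fun u => Derive (fun z => gt (H z) u) t) (- (PI / 2)) (PI / 2)).
  2: { apply RInt_ext. intros; apply Derive_gt. }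
  apply (is_derive_RInt_param (fun s u => gt (H s) u)).
  - apply filter_forall. intros y u _. unfold gt. destruct Rlt_dec.
    + apply ex_derive_mult. apply HD. apply ex_derive_const.
    + apply ex_derive_const.
  - intros u _. apply continuity_2d_pt_ext with (fun s v => gt (Dt H s) v).
    intros; symmetry; apply Derive_gt.
    destruct N2 as [C2 [M2 D2]]. apply gt_cont2 with M2; auto.
  - apply filter_forall. intros y.
    destruct (Nice2_DecayC H y N1) as [C [M D]]. eapply ex_RInt_gt; eauto.
Qed.

Lemma TI_cont H : Nice2 H -> Nice2 (Dt H) -> (forall t x, ex_derive (fun s => H s x) t) ->
  forall t, continuous (fun t => TI (H t)) t.
Proof.
  intros. apply (@ex_derive_continuous R_AbsRing R_NormedModule). eexists. apply TI_deriv; auto.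
Qed.

Lemma TI_smooth (hs : nat -> R -> R -> R) :
  (forall n, Nice2 (hs n)) -> (forall n t x, ex_derive (fun s => hs n s x) t) ->
  (forall n t x, hs (S n) t x = Dt (hs n) t x) ->
  forall n t, ex_derive_n (fun t => TI (hs 0%nat t)) n t /\ Derive_n (fun t => TI (hs 0%nat t)) n t = TI (hs n t).
Proof.
  intros N D E.
  assert (ND : forall n t, is_derive (fun t => TI (hs n t)) t (TI (hs (S n) t))).
  { intros n t. replace (TI (hs (S n) t)) with (TI (Dt (hs n) t)).
    apply TI_deriv; auto. destruct (N (S n)) as [C [M B]]. split.
    intros t' x; apply continuity_2d_pt_ext with (hs (S n)); [intros; apply E | apply C].
    exists M; intros t' x'. rewrite <- E. apply B.
    apply TI_ext; intros; symmetry; apply E. }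
  induction n; intros t.
  - simpl; auto.
  - split.
    + simpl. apply ex_derive_ext with (fun t => TI (hs n t)).
      intros; symmetry; apply IHn. eexists; apply ND.
    + simpl. rewrite (Derive_ext _ (fun t => TI (hs n t))). apply is_derive_unique, ND.
      intros; apply IHn.
Qed.


Lemma jc_2d H : jointly_continuous H -> forall t x, continuity_2d_pt H t x.
Proof. intros J t x. apply continuity_2d_pt_filterlim. apply J. Qed.

Lemma decay_from_bounds (h : R -> R) M0 M4 :
  (forall x, Rabs (h x) <= M0) -> (forall x, Rabs (x ^ 4) * Rabs (h x) <= M4) -> Decay h (2 * M0 + 2 * M4).
Proof.
  intros B0 B4 x. specialize (B0 x); specialize (B4 x).
  rewrite Rabs_pos_eq in B4 by (replace (x^4) with ((x^2)^2) by ring; apply pow2_ge_0).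
  pose proof (Rabs_pos (h x)).
  assert ((1 + x ^ 2) ^ 2 <= 2 + 2 * x ^ 4) by (pose proof (pow2_ge_0 (x^2 - 1)); nra).
  nra.
Qed.

Lemma im_le_Cmod (c : C) : Rabs (snd c) <= Cmod c.
Proof. eapply Rle_trans, Rmax_Cmod. apply Rmax_r. Qed.
Lemma fst_le_Cmod (c : C) : Rabs (fst c) <= Cmod c.
Proof. eapply Rle_trans, Rmax_Cmod. apply Rmax_l. Qed.

Definition R0 (f : R -> R -> C) := fun t x => reC (f t x).
Definition I0 (f : R -> R -> C) := fun t x => imC (f t x).

Lemma Sch_nice f a b : Schwartz f ->
  Nice2 (Dword (repeat true a ++ repeat false b) (R0 f)) /\ Nice2 (Dword (repeat true a ++ repeat false b) (I0 f)).
Proof.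
  intros [P [S1 [S2 B]]]. destruct (B a b 0%nat) as [M0 H0]. destruct (B a b 4%nat) as [M4 H4].
  split; split.
  - apply jc_2d, S1.
  - exists (2 * M0 + 2 * M4). intro t. apply decay_from_bounds.
    + intro x. specialize (H0 t x). simpl in H0. rewrite Rabs_R1, Rmult_1_l in H0.
      eapply Rle_trans, H0. apply (fst_le_Cmod (DtxC a b f t x)).
    + intro x. specialize (H4 t x). eapply Rle_trans, H4. apply Rmult_le_compat_l. apply Rabs_pos.
      apply (fst_le_Cmod (DtxC a b f t x)).
  - apply jc_2d, S2.
  - exists (2 * M0 + 2 * M4). intro t. apply decay_from_bounds.
    + intro x. specialize (H0 t x). simpl in H0. rewrite Rabs_R1, Rmult_1_l in H0.
      eapply Rle_trans, H0. apply (im_le_Cmod (DtxC a b f t x)).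
    + intro x. specialize (H4 t x). eapply Rle_trans, H4. apply Rmult_le_compat_l. apply Rabs_pos.
      apply (im_le_Cmod (DtxC a b f t x)).
Qed.

Lemma Sch_exd f w : Schwartz f ->
  (forall t x, ex_derive (fun s => Dword w (R0 f) s x) t) /\ (forall t x, ex_derive (fun s => Dword w (I0 f) s x) t).
Proof. intros [P [S1 [S2 B]]]. split; [apply S1|apply S2]. Qed.

Lemma cont2_cos xi t x : continuity_2d_pt (fun _ x => cos (x * xi)) t x.
Proof. apply cont_2d_of_1d, contR_cos_lin. Qed.
Lemma cont2_sin xi t x : continuity_2d_pt (fun _ x => sin (x * xi)) t x.
Proof. apply cont_2d_of_1d, contR_sin_lin. Qed.

Lemma Nice2_comb A B s1 s2 (p1 p2 : R -> R) :
  (forall t x, continuity_2d_pt (fun _ x => p1 x) t x) -> (forall t x, continuity_2d_pt (fun _ x => p2 x) t x) ->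
  (forall x, Rabs (p1 x) <= 1) -> (forall x, Rabs (p2 x) <= 1) -> Rabs s1 <= 1 -> Rabs s2 <= 1 ->
  Nice2 A -> Nice2 B -> Nice2 (fun t x => s1 * (A t x * p1 x) + s2 * (B t x * p2 x)).
Proof.
  intros C1 C2 B1 B2 Hs1 Hs2 [CA [MA DA]] [CB [MB DB]]. split.
  - intros t x. apply continuity_2d_pt_plus; apply continuity_2d_pt_mult;
    try apply continuity_2d_pt_const; apply continuity_2d_pt_mult; auto.
  - exists (MA + MB). intros t x. specialize (DA t x); specialize (DB t x).
    specialize (B1 x); specialize (B2 x).
    assert (0 <= (1 + x ^ 2) ^ 2) by (apply pow_le; nra).
    pose proof (Rabs_triang (s1 * (A t x * p1 x)) (s2 * (B t x * p2 x))).
    rewrite !Rabs_mult in H0.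
    pose proof (Rabs_pos (A t x)). pose proof (Rabs_pos (B t x)).
    pose proof (Rabs_pos s1). pose proof (Rabs_pos s2). pose proof (Rabs_pos (p1 x)). pose proof (Rabs_pos (p2 x)).
    assert (Rabs s1 * (Rabs (A t x) * Rabs (p1 x)) <= Rabs (A t x)).
    { rewrite <- Rmult_assoc, (Rmult_comm (Rabs s1)), Rmult_assoc.
      rewrite <- (Rmult_1_r (Rabs (A t x))) at 2. apply Rmult_le_compat_l; auto.
      rewrite <- (Rmult_1_r 1). apply Rmult_le_compat; auto. }
    assert (Rabs s2 * (Rabs (B t x) * Rabs (p2 x)) <= Rabs (B t x)).
    { rewrite <- Rmult_assoc, (Rmult_comm (Rabs s2)), Rmult_assoc.
      rewrite <- (Rmult_1_r (Rabs (B t x))) at 2. apply Rmult_le_compat_l; auto.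
      rewrite <- (Rmult_1_r 1). apply Rmult_le_compat; auto. }
    nra.
Qed.

Lemma abs_cos_le a : Rabs (cos a) <= 1. Proof. apply Rabs_le, COS_bound. Qed.
Lemma abs_sin_le a : Rabs (sin a) <= 1. Proof. apply Rabs_le, SIN_bound. Qed.

Definition Hre (A B : R -> R -> R) xi := fun t x => A t x * cos (x * xi) + B t x * sin (x * xi).
Definition Him (A B : R -> R -> R) xi := fun t x => B t x * cos (x * xi) - A t x * sin (x * xi).

Lemma Nice2_Hre A B xi : Nice2 A -> Nice2 B -> Nice2 (Hre A B xi).
Proof.
  intros. assert (E : forall t x, 1 * (A t x * cos (x * xi)) + 1 * (B t x * sin (x * xi)) = Hre A B xi t x).
  intros; unfold Hre; ring.
  destruct (Nice2_comb A B 1 1 (fun x => cos (x * xi)) (fun x => sin (x * xi))) as [C [M D]]; auto;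
   try apply cont2_cos; try apply cont2_sin; try (intros; apply abs_cos_le); try (intros; apply abs_sin_le);
   try (rewrite Rabs_R1; lra).
  split. intros; eapply continuity_2d_pt_ext, C; auto. exists M; intros t x; rewrite <- E; apply D.
Qed.

Lemma Nice2_Him A B xi : Nice2 A -> Nice2 B -> Nice2 (Him A B xi).
Proof.
  intros. assert (E : forall t x, 1 * (B t x * cos (x * xi)) + (-1) * (A t x * sin (x * xi)) = Him A B xi t x).
  intros; unfold Him; ring.
  destruct (Nice2_comb B A 1 (-1) (fun x => cos (x * xi)) (fun x => sin (x * xi))) as [C [M D]]; auto;
   try apply cont2_cos; try apply cont2_sin; try (intros; apply abs_cos_le); try (intros; apply abs_sin_le);
   try (rewrite ?Rabs_R1, ?Rabs_m1; lra).
  split. intros; eapply continuity_2d_pt_ext, C; auto. exists M; intros t x; rewrite <- E; apply D.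
Qed.

Lemma exR_plus (f g : R -> R) t : ex_derive f t -> ex_derive g t -> ex_derive (fun s => f s + g s) t.
Proof. apply (ex_derive_plus (K := R_AbsRing) (V := R_NormedModule)). Qed.
Lemma exR_minus (f g : R -> R) t : ex_derive f t -> ex_derive g t -> ex_derive (fun s => f s - g s) t.
Proof. apply (ex_derive_minus (K := R_AbsRing) (V := R_NormedModule)). Qed.
Lemma exR_mult (f g : R -> R) t : ex_derive f t -> ex_derive g t -> ex_derive (fun s => f s * g s) t.
Proof. apply ex_derive_mult. Qed.
Lemma exR_const (a : R) t : ex_derive (fun _ : R => a) t.
Proof. apply ex_derive_const. Qed.

Lemma Derive_mulc (g : R -> R) k t : Derive (fun s => g s * k) t = Derive g t * k.
Proof. rewrite (Derive_ext _ (fun s => k * g s)) by (intros; ring). rewrite Derive_scal; ring. Qed.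

Lemma Dt_Hre A B xi t x : ex_derive (fun s => A s x) t -> ex_derive (fun s => B s x) t ->
  Dt (Hre A B xi) t x = Hre (Dt A) (Dt B) xi t x.
Proof.
  intros HA HB. unfold Dt, Hre. rewrite Derive_plus.
  rewrite !Derive_mulc. reflexivity.
  apply ex_derive_mult; auto; apply ex_derive_const.
  apply ex_derive_mult; auto; apply ex_derive_const.
Qed.

Lemma Dt_Him A B xi t x : ex_derive (fun s => A s x) t -> ex_derive (fun s => B s x) t ->
  Dt (Him A B xi) t x = Him (Dt A) (Dt B) xi t x.
Proof.
  intros HA HB. unfold Dt, Him. rewrite Derive_minus.
  rewrite !Derive_mulc. reflexivity.
  apply ex_derive_mult; auto; apply ex_derive_const.
  apply ex_derive_mult; auto; apply ex_derive_const.
Qed.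

Lemma ex_derive_Hre A B xi t x : ex_derive (fun s => A s x) t -> ex_derive (fun s => B s x) t ->
  ex_derive (fun s => Hre A B xi s x) t.
Proof. intros. unfold Hre. apply exR_plus; apply exR_mult; auto; apply exR_const. Qed.
Lemma ex_derive_Him A B xi t x : ex_derive (fun s => A s x) t -> ex_derive (fun s => B s x) t ->
  ex_derive (fun s => Him A B xi s x) t.
Proof. intros. unfold Him. apply exR_minus; apply exR_mult; auto; apply exR_const. Qed.

Definition Wn n := (repeat true n ++ repeat false 0).

Lemma Sch_F f xi : Schwartz f ->
  forall n t,
   (ex_derive_n (fun t => TI (Hre (R0 f) (I0 f) xi t)) n t /\
    Derive_n (fun t => TI (Hre (R0 f) (I0 f) xi t)) n t = TI (Hre (Dword (Wn n) (R0 f)) (Dword (Wn n) (I0 f)) xi t)) /\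
   (ex_derive_n (fun t => TI (Him (R0 f) (I0 f) xi t)) n t /\
    Derive_n (fun t => TI (Him (R0 f) (I0 f) xi t)) n t = TI (Him (Dword (Wn n) (R0 f)) (Dword (Wn n) (I0 f)) xi t)).
Proof.
  intros Sf n t. split.
  - apply (TI_smooth (fun n => Hre (Dword (Wn n) (R0 f)) (Dword (Wn n) (I0 f)) xi)).
    + intro k. destruct (Sch_nice f k 0 Sf). apply Nice2_Hre; auto.
    + intros k t' x. destruct (Sch_exd f (Wn k) Sf). apply ex_derive_Hre; auto.
    + intros k t' x. destruct (Sch_exd f (Wn k) Sf). rewrite Dt_Hre; auto.
  - apply (TI_smooth (fun n => Him (Dword (Wn n) (R0 f)) (Dword (Wn n) (I0 f)) xi)).
    + intro k. destruct (Sch_nice f k 0 Sf). apply Nice2_Him; auto.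
    + intros k t' x. destruct (Sch_exd f (Wn k) Sf). apply ex_derive_Him; auto.
    + intros k t' x. destruct (Sch_exd f (Wn k) Sf). rewrite Dt_Him; auto.
Qed.


Lemma isR_plus (f g : R -> R) t a b : is_derive f t a -> is_derive g t b -> is_derive (fun s => f s + g s) t (a + b).
Proof. apply (is_derive_plus (K := R_AbsRing) (V := R_NormedModule)). Qed.
Lemma isR_minus (f g : R -> R) t a b : is_derive f t a -> is_derive g t b -> is_derive (fun s => f s - g s) t (a - b).
Proof. apply (is_derive_minus (K := R_AbsRing) (V := R_NormedModule)). Qed.
Lemma isR_val0 (f : R -> R) (t a b : R) : a = b -> is_derive f t a -> is_derive f t b.
Proof. intros ->; auto. Qed.
Lemma isR_val1 (f : R -> R) (t a b : R) : is_derive f t a -> a = b -> is_derive f t b.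
Proof. intros H <-; auto. Qed.
Lemma isR_mult (f g : R -> R) t a b : is_derive f t a -> is_derive g t b -> is_derive (fun s => f s * g s) t (a * g t + f t * b).
Proof. intros. apply (is_derive_mult (K := R_AbsRing) f g); auto. intros; apply Rmult_comm. Qed.
Lemma isR_const (c : R) t : is_derive (fun _ => c) t 0.
Proof. apply (is_derive_const (K := R_AbsRing) (V := R_NormedModule)). Qed.
Lemma isR_ext (f g : R -> R) t a : (forall s, f s = g s) -> is_derive f t a -> is_derive g t a.
Proof. intros; eapply is_derive_ext; eauto. Qed.
Lemma isR_val (f : R -> R) (t a b : R) : a = b -> is_derive f t a -> is_derive f t b.
Proof. intros ->; auto. Qed.

Definition CD (u : R -> C) t (d : C) :=
  is_derive (fun s => fst (u s)) t (fst d) /\ is_derive (fun s => snd (u s)) t (snd d).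

Lemma CD_ext u v t d : (forall s, u s = v s) -> CD u t d -> CD v t d.
Proof. intros E [H1 H2]; split; eapply isR_ext; eauto; intros; simpl; rewrite E; auto. Qed.
Lemma CD_val u t d d' : d = d' -> CD u t d -> CD u t d'.
Proof. intros ->; auto. Qed.
Lemma CD_plus u v t du dv : CD u t du -> CD v t dv -> CD (fun s => (u s + v s)%C) t (du + dv)%C.
Proof. intros [H1 H2] [K1 K2]; split; simpl; apply isR_plus; auto. Qed.
Lemma CD_const (k : C) t : CD (fun _ => k) t 0%C.
Proof. split; apply isR_const. Qed.
Lemma CD_mult u v t du dv : CD u t du -> CD v t dv -> CD (fun s => (u s * v s)%C) t (du * v t + u t * dv)%C.
Proof.
  intros [H1 H2] [K1 K2]; split; simpl.
  - eapply isR_val, isR_minus; try (apply isR_mult; eauto). simpl; ring.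
  - eapply isR_val, isR_plus; try (apply isR_mult; eauto). simpl; ring.
Qed.

Definition cexp (z : C) : C := (exp (fst z) * cos (snd z), exp (fst z) * sin (snd z)).

Lemma cexp_add z w : cexp (z + w)%C = (cexp z * cexp w)%C.
Proof.
  unfold cexp; apply injective_projections; simpl; rewrite ?exp_plus, ?cos_plus, ?sin_plus; ring.
Qed.
Lemma cexp_0 : cexp 0%C = 1%C.
Proof. unfold cexp; apply injective_projections; simpl; rewrite ?exp_0, ?cos_0, ?sin_0; ring. Qed.
Lemma cexp_inv z : (cexp (- z) * cexp z)%C = 1%C.
Proof. rewrite <- cexp_add. rewrite Cplus_comm, Cplus_opp_r. apply cexp_0. Qed.

Lemma isR_comp (f g : R -> R) t df dg : is_derive f (g t) df -> is_derive g t dg -> is_derive (fun s => f (g s)) t (dg * df).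
Proof. intros. apply (is_derive_comp (K := R_AbsRing) (V := R_NormedModule) f g); auto. Qed.

Lemma CD_cexp a t da : CD a t da -> CD (fun s => cexp (a s)) t (da * cexp (a t))%C.
Proof.
  intros [H1 H2]. unfold cexp. split; simpl.
  - eapply isR_val1. apply isR_mult; [apply isR_comp; [apply is_derive_exp|apply H1]
                                 | apply isR_comp; [apply is_derive_cos|apply H2]]. cbv beta; ring.
  - eapply isR_val1. apply isR_mult; [apply isR_comp; [apply is_derive_exp|apply H1]
                                 | apply isR_comp; [apply is_derive_sin|apply H2]]. cbv beta; ring.
Qed.

Lemma FTC (g : R -> R) : (forall x, continuous g x) -> forall t, is_derive (fun t => RInt g 0 t) t (g t).
Proof.
  intros C t. apply (is_derive_RInt g (fun t => RInt g 0 t) 0 t).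
  apply filter_forall; intros; apply (@RInt_correct R_CompleteNormedModule). apply exR_cont; auto.
  auto.
Qed.

Lemma RInt_shift (g : R -> R) : (forall x, continuous g x) ->
  forall t, RInt g 0 (t + 2 * PI) = RInt g 0 (2 * PI) + RInt (fun y => g (y + 2 * PI)) 0 t.
Proof.
  intros C t. rewrite <- (RInt_Chasles g 0 (2 * PI) (t + 2 * PI)) by (apply exR_cont; auto).
  pose proof (RInt_comp_lin g 1 (2 * PI) 0 t) as E.
  replace (1 * 0 + 2 * PI) with (2 * PI) in E by ring.
  replace (1 * t + 2 * PI) with (t + 2 * PI) in E by ring.
  rewrite <- E by (apply exR_cont; auto). unfold plus; simpl. f_equal.
  apply RInt_ext. intros; unfold scal; simpl; unfold mult; simpl.
  replace (1 * x + 2 * PI) with (x + 2 * PI) by ring. ring.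
Qed.


Definition ar (c : R -> C) (q : C) xi t := fst q - xi * snd (c t).
Definition ai (c : R -> C) (q : C) xi t := xi * fst (c t) + snd q.
Definition aC c q xi t : C := (ar c q xi t, ai c q xi t).
Definition Aa c q xi t : C := (RInt (ar c q xi) 0 t, RInt (ai c q xi) 0 t).
Definition EE c q xi t : C := cexp (Aa c q xi t).
Definition Jf c q xi (F : R -> C) t : C :=
  (RInt (fun s => fst (EE c q xi s * F s)%C) 0 t, RInt (fun s => snd (EE c q xi s * F s)%C) 0 t).
Definition ww c q xi F (w0 : C) t : C := (cexp (- Aa c q xi t) * (w0 + Jf c q xi F t))%C.

Lemma CD_opp u t d : CD u t d -> CD (fun s => (- u s)%C) t (- d)%C.
Proof.
  intros [H1 H2]; split; simpl.
  - apply (is_derive_opp (K := R_AbsRing) (V := R_NormedModule) (fun s => fst (u s))); auto.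
  - apply (is_derive_opp (K := R_AbsRing) (V := R_NormedModule) (fun s => snd (u s))); auto.
Qed.

Lemma CD_cont1 u t d : CD u t d -> continuous (fun s => fst (u s)) t.
Proof. intros [H1 H2]. apply (@ex_derive_continuous R_AbsRing R_NormedModule). eexists; eauto. Qed.
Lemma CD_cont2 u t d : CD u t d -> continuous (fun s => snd (u s)) t.
Proof. intros [H1 H2]. apply (@ex_derive_continuous R_AbsRing R_NormedModule). eexists; eauto. Qed.

Lemma contR_minus (f g : R -> R) x : continuous f x -> continuous g x -> continuous (fun y => f y - g y) x.
Proof.
  intros. apply contR_ext with (fun y => f y + (-1) * g y). intros; ring.
  apply contR_plus; auto. apply contR_mult; auto. apply contR_const.
Qed.

Section ODE.
Variables (c : R -> C) (q : C) (xi : R) (F : R -> C).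
Hypothesis Hc : Cinf_T1 c.
Hypothesis HF : Cinf_T1 F.

Lemma c1_smooth : smooth1 (fun t => fst (c t)). Proof. apply Hc. Qed.
Lemma c2_smooth : smooth1 (fun t => snd (c t)). Proof. apply Hc. Qed.
Lemma F1_smooth : smooth1 (fun t => fst (F t)). Proof. apply HF. Qed.
Lemma F2_smooth : smooth1 (fun t => snd (F t)). Proof. apply HF. Qed.

Lemma ar_smooth : smooth1 (ar c q xi).
Proof. unfold ar. apply smooth_minus. apply smooth_const. apply smooth_mult. apply smooth_const. apply c2_smooth. Qed.
Lemma ai_smooth : smooth1 (ai c q xi).
Proof. unfold ai. apply smooth_plus. apply smooth_mult. apply smooth_const. apply c1_smooth. apply smooth_const. Qed.

Lemma CD_Aa t : CD (Aa c q xi) t (aC c q xi t).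
Proof.
  split; simpl; apply FTC; intros; apply smooth_cont; [apply ar_smooth|apply ai_smooth].
Qed.

Lemma CD_EE t : CD (EE c q xi) t (aC c q xi t * EE c q xi t)%C.
Proof. apply (CD_cexp (Aa c q xi)), CD_Aa. Qed.

Lemma CD_Em t : CD (fun s => cexp (- Aa c q xi s))%C t (- aC c q xi t * cexp (- Aa c q xi t))%C.
Proof. apply (CD_cexp (fun s => - Aa c q xi s)%C). apply CD_opp, CD_Aa. Qed.

Lemma EF_cont1 t : continuous (fun s => fst (EE c q xi s * F s)%C) t.
Proof.
  apply contR_ext with (fun s => fst (EE c q xi s) * fst (F s) - snd (EE c q xi s) * snd (F s)). intros; reflexivity.
  apply contR_minus; apply contR_mult.
  apply (CD_cont1 _ t _ (CD_EE t)). apply smooth_cont, F1_smooth. apply (CD_cont2 _ t _ (CD_EE t)). apply smooth_cont, F2_smooth.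
Qed.
Lemma EF_cont2 t : continuous (fun s => snd (EE c q xi s * F s)%C) t.
Proof.
  apply contR_ext with (fun s => fst (EE c q xi s) * snd (F s) + snd (EE c q xi s) * fst (F s)). intros; reflexivity.
  apply contR_plus; apply contR_mult.
  apply (CD_cont1 _ t _ (CD_EE t)). apply smooth_cont, F2_smooth. apply (CD_cont2 _ t _ (CD_EE t)). apply smooth_cont, F1_smooth.
Qed.

Lemma CD_J t : CD (Jf c q xi F) t (EE c q xi t * F t)%C.
Proof. split; simpl; apply (FTC (fun s => _)); intros; [apply EF_cont1|apply EF_cont2]. Qed.

Lemma CD_w w0 t : CD (ww c q xi F w0) t (- aC c q xi t * ww c q xi F w0 t + F t)%C.
Proof.
  unfold ww. eapply CD_val, CD_mult. 2: apply CD_Em. 2: apply CD_plus; [apply CD_const|apply CD_J].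
  assert (H : (cexp (- Aa c q xi t) * EE c q xi t)%C = 1%C) by apply cexp_inv.
  transitivity (- aC c q xi t * (cexp (- Aa c q xi t) * (w0 + Jf c q xi F t)) +
     (cexp (- Aa c q xi t) * EE c q xi t) * F t)%C. ring.
  rewrite H. ring.
Qed.

Lemma Cderive_w w0 t : Cderive (ww c q xi F w0) t = (- aC c q xi t * ww c q xi F w0 t + F t)%C.
Proof.
  destruct (CD_w w0 t) as [H1 H2]. unfold Cderive, reC, imC.
  apply injective_projections; simpl; apply is_derive_unique; auto.
Qed.

Lemma aC_eq t : aC c q xi t = (Ci * (RtoC xi * c t - Ci * q))%C.
Proof. unfold aC, ar, ai, Ci, RtoC. apply injective_projections; simpl; ring. Qed.

Lemma w_eq w0 t : (Cderive (ww c q xi F w0) t + Ci * (RtoC xi * c t - Ci * q) * ww c q xi F w0 t)%C = F t.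
Proof. rewrite Cderive_w, <- aC_eq. ring. Qed.

Lemma w_smooth w0 : smooth1 (fun t => fst (ww c q xi F w0 t)) /\ smooth1 (fun t => snd (ww c q xi F w0 t)).
Proof.
  apply (boot2 _ _ (fun t => fst (F t)) (fun t => snd (F t))
    (fun t => - ar c q xi t) (ai c q xi) (fun t => - ai c q xi t) (fun t => - ar c q xi t));
  try apply F1_smooth; try apply F2_smooth; try apply ai_smooth;
  try (apply smooth_ext with (fun t => (-1) * ar c q xi t); [intros; ring|apply smooth_mult; [apply smooth_const|apply ar_smooth]]);
  try (apply smooth_ext with (fun t => (-1) * ai c q xi t); [intros; ring|apply smooth_mult; [apply smooth_const|apply ai_smooth]]).
  - intro t. destruct (CD_w w0 t) as [H1 H2]. eapply isR_val1. apply H1. unfold aC. simpl. ring.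
  - intro t. destruct (CD_w w0 t) as [H1 H2]. eapply isR_val1. apply H2. unfold aC. simpl. ring.
Qed.

Lemma ar_per t : ar c q xi (t + 2 * PI) = ar c q xi t.
Proof. unfold ar. destruct Hc as [P _]. rewrite P. auto. Qed.
Lemma ai_per t : ai c q xi (t + 2 * PI) = ai c q xi t.
Proof. unfold ai. destruct Hc as [P _]. rewrite P. auto. Qed.

Lemma Aa_per t : Aa c q xi (t + 2 * PI) = (Aa c q xi (2 * PI) + Aa c q xi t)%C.
Proof.
  unfold Aa. apply injective_projections; simpl.
  - rewrite RInt_shift. f_equal. apply RInt_ext; intros; apply ar_per.
    intros; apply smooth_cont, ar_smooth.
  - rewrite RInt_shift. f_equal. apply RInt_ext; intros; apply ai_per.
    intros; apply smooth_cont, ai_smooth.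
Qed.

Lemma EE_per t : EE c q xi (t + 2 * PI) = (EE c q xi (2 * PI) * EE c q xi t)%C.
Proof. unfold EE. rewrite Aa_per, cexp_add. auto. Qed.

Lemma RInt_lin (f g : R -> R) a b t : ex_RInt f 0 t -> ex_RInt g 0 t ->
  RInt (fun y => a * f y + b * g y) 0 t = a * RInt f 0 t + b * RInt g 0 t.
Proof.
  intros Hf Hg.
  transitivity (plus (RInt (fun y => scal a (f y)) 0 t) (RInt (fun y => scal b (g y)) 0 t)).
  rewrite <- (RInt_plus (V := R_CompleteNormedModule)). apply RInt_ext; intros; reflexivity.
  apply (ex_RInt_scal (V := R_CompleteNormedModule)); auto.
  apply (ex_RInt_scal (V := R_CompleteNormedModule)); auto.
  rewrite !(RInt_scal (V := R_CompleteNormedModule)); auto.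
Qed.

Lemma J_per t : Jf c q xi F (t + 2 * PI) = (Jf c q xi F (2 * PI) + EE c q xi (2 * PI) * Jf c q xi F t)%C.
Proof.
  destruct HF as [PF _].
  assert (E1 : forall y, fst (EE c q xi (y + 2 * PI) * F (y + 2 * PI))%C =
     fst (EE c q xi (2 * PI)) * fst (EE c q xi y * F y)%C + (- snd (EE c q xi (2 * PI))) * snd (EE c q xi y * F y)%C).
  { intros; rewrite EE_per, PF; simpl; ring. }
  assert (E2 : forall y, snd (EE c q xi (y + 2 * PI) * F (y + 2 * PI))%C =
     fst (EE c q xi (2 * PI)) * snd (EE c q xi y * F y)%C + snd (EE c q xi (2 * PI)) * fst (EE c q xi y * F y)%C).
  { intros; rewrite EE_per, PF; simpl; ring. }
  assert (X1 : ex_RInt (fun s => fst (EE c q xi s * F s)%C) 0 t) by (apply exR_cont; intros; apply EF_cont1).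
  assert (X2 : ex_RInt (fun s => snd (EE c q xi s * F s)%C) 0 t) by (apply exR_cont; intros; apply EF_cont2).
  unfold Jf at 1. apply injective_projections.
  - simpl fst. rewrite RInt_shift by apply EF_cont1.
    rewrite (RInt_ext _ _ _ _ (fun x _ => E1 x)). rewrite RInt_lin by auto.
    unfold Jf. simpl. ring.
  - simpl snd. rewrite RInt_shift by apply EF_cont2.
    rewrite (RInt_ext _ _ _ _ (fun x _ => E2 x)). rewrite RInt_lin by auto.
    unfold Jf. simpl. ring.
Qed.

Lemma w_per w0 : (cexp (- Aa c q xi (2 * PI)) * (w0 + Jf c q xi F (2 * PI)))%C = w0 ->
  forall t, ww c q xi F w0 (t + 2 * PI) = ww c q xi F w0 t.
Proof.
  intros HW t. unfold ww. rewrite Aa_per, J_per, Copp_plus_distr, cexp_add.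
  assert (H2 : (cexp (- Aa c q xi (2 * PI)) * EE c q xi (2 * PI))%C = 1%C) by apply cexp_inv.
  transitivity (cexp (- Aa c q xi t) * (cexp (- Aa c q xi (2 * PI)) * (w0 + Jf c q xi F (2 * PI))) +
    (cexp (- Aa c q xi (2 * PI)) * EE c q xi (2 * PI)) * (cexp (- Aa c q xi t) * Jf c q xi F t))%C.
  ring. rewrite HW, H2. ring.
Qed.

Theorem ode_sol w0 : (cexp (- Aa c q xi (2 * PI)) * (w0 + Jf c q xi F (2 * PI)))%C = w0 ->
  exists w, Cinf_T1 w /\ forall t, (Cderive w t + Ci * (RtoC xi * c t - Ci * q) * w t)%C = F t.
Proof.
  intros HW. exists (ww c q xi F w0). split.
  - split. intro t. apply w_per; auto. apply w_smooth.
  - apply w_eq.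
Qed.

End ODE.

Lemma choose_w0 (EmP I : C) : (EmP = 1%C -> I = 0%C) -> exists w0, (EmP * (w0 + I))%C = w0.
Proof.
  intros H. destruct (Classical_Prop.classic (EmP = 1%C)) as [e|n].
  - exists 0%C. rewrite (H e), e. ring.
  - exists (EmP * I / (1 - EmP))%C. field.
    intro K. apply n. transitivity (1 - (1 - EmP))%C. ring. rewrite K. ring.
Qed.


Lemma RInt_lin_gen (f g : R -> R) al be a b : ex_RInt f a b -> ex_RInt g a b ->
  RInt (fun y => al * f y + be * g y) a b = al * RInt f a b + be * RInt g a b.
Proof.
  intros Hf Hg.
  transitivity (plus (RInt (fun y => scal al (f y)) a b) (RInt (fun y => scal be (g y)) a b)).
  rewrite <- (RInt_plus (V := R_CompleteNormedModule)). apply RInt_ext; intros; reflexivity.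
  apply (ex_RInt_scal (V := R_CompleteNormedModule)); auto.
  apply (ex_RInt_scal (V := R_CompleteNormedModule)); auto.
  rewrite !(RInt_scal (V := R_CompleteNormedModule)); auto.
Qed.

Lemma exTI k : DecayC k -> ex_RInt (gt k) (- (PI / 2)) (PI / 2).
Proof. intros [C [M D]]. eapply ex_RInt_gt; eauto. Qed.

Lemma TI_lin k1 k2 al be : DecayC k1 -> DecayC k2 ->
  TI (fun x => al * k1 x + be * k2 x) = al * TI k1 + be * TI k2.
Proof.
  intros D1 D2. unfold TI. rewrite <- RInt_lin_gen by (apply exTI; auto).
  apply RInt_ext. intros x _. unfold gt. destruct Rlt_dec; cbv beta; match goal with |- ?a = ?b => change (@eq R a b) end; ring.
Qed.

Lemma TI_bound k M : DecayC k -> Decay k M -> Rabs (TI k) <= PI * M.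
Proof.
  intros DC D. unfold TI. pose proof PI_RGT_0.
  replace (PI * M) with ((PI / 2 - - (PI / 2)) * M) by field.
  apply abs_RInt_le_const. lra. apply exTI; auto.
  intros u _. eapply Rle_trans. apply gt_bound, D.
  pose proof (Decay_nonneg _ _ D). pose proof (COS_bound u).
  assert (cos u ^ 2 <= 1) by nra. nra.
Qed.

Lemma decay_lim_p k M : Decay k M -> filterlim k (Rbar_locally p_infty) (locally 0).
Proof.
  intros D. pose proof (Decay_nonneg _ _ D) as M0. apply filterlim_locally. intro eps.
  exists ((M + 1) / eps). intros x Hx. apply ball_R. rewrite Rminus_0_r.
  pose proof (cond_pos eps) as ep.
  assert (X : 0 < x). { eapply Rle_lt_trans, Hx. apply Rdiv_le_0_compat; lra. }
  specialize (D x). pose proof (Rabs_pos (k x)).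
  assert (x <= (1 + x ^ 2) ^ 2) by nra.
  assert (Rabs (k x) * x <= M) by nra.
  assert ((M + 1) < eps * x). { apply Rmult_lt_compat_l with (r := eps) in Hx; auto.
    replace (eps * ((M + 1) / eps)) with (M + 1) in Hx by (field; lra). lra. }
  nra.
Qed.

Lemma decay_lim_m k M : Decay k M -> filterlim k (Rbar_locally m_infty) (locally 0).
Proof.
  intros D. pose proof (Decay_nonneg _ _ D) as M0. apply filterlim_locally. intro eps.
  exists (- ((M + 1) / eps)). intros x Hx. apply ball_R. rewrite Rminus_0_r.
  pose proof (cond_pos eps) as ep.
  assert (X : 0 < - x). { assert (0 <= (M + 1) / eps) by (apply Rdiv_le_0_compat; lra). lra. }
  specialize (D x). pose proof (Rabs_pos (k x)).
  assert (- x <= (1 + x ^ 2) ^ 2) by nra.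
  assert (Rabs (k x) * (- x) <= M) by nra.
  assert ((M + 1) < eps * (- x)). { assert ((M + 1) / eps < - x) by lra.
    apply Rmult_lt_compat_l with (r := eps) in H2; auto.
    replace (eps * ((M + 1) / eps)) with (M + 1) in H2 by (field; lra). lra. }
  nra.
Qed.

Definition FR (g : R -> R -> C) xi t : C :=
  (TI (Hre (fun t x => fst (g t x)) (fun t x => snd (g t x)) xi t),
   TI (Him (fun t x => fst (g t x)) (fun t x => snd (g t x)) xi t)).

Definition DC2 (g : R -> R -> C) t := DecayC (fun x => fst (g t x)) /\ DecayC (fun x => snd (g t x)).

Lemma fourier_FR g xi t : DC2 g t -> fourier_x g t xi = FR g xi t.
Proof. intros [H1 H2]. rewrite fourier_val by auto. reflexivity. Qed.

Lemma FR_ext g g' xi t : (forall x, g t x = g' t x) -> FR g xi t = FR g' xi t.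
Proof.
  intros E. unfold FR. f_equal; apply TI_ext; intros; unfold Hre, Him; rewrite E; auto.
Qed.

Lemma DC2_hre g xi t : DC2 g t -> DecayC (Hre (fun t x => fst (g t x)) (fun t x => snd (g t x)) xi t).
Proof. intros [H1 H2]. apply (DecayC_hre (g t)); auto. Qed.
Lemma DC2_him g xi t : DC2 g t -> DecayC (Him (fun t x => fst (g t x)) (fun t x => snd (g t x)) xi t).
Proof. intros [H1 H2]. apply (DecayC_him (g t)); auto. Qed.

Lemma DC2_lin g1 g2 (k1 k2 : C) t : DC2 g1 t -> DC2 g2 t -> DC2 (fun t x => k1 * g1 t x + k2 * g2 t x)%C t.
Proof.
  intros [A1 A2] [B1 B2]. split.
  - apply DecayC_ext with (fun x => (fst k1 * fst (g1 t x) + (- snd k1) * snd (g1 t x)) +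
       (fst k2 * fst (g2 t x) + (- snd k2) * snd (g2 t x))). intros; simpl; ring.
    repeat apply DecayC_plus; apply DecayC_scal; auto.
  - apply DecayC_ext with (fun x => (fst k1 * snd (g1 t x) + snd k1 * fst (g1 t x)) +
       (fst k2 * snd (g2 t x) + snd k2 * fst (g2 t x))). intros; simpl; ring.
    repeat apply DecayC_plus; apply DecayC_scal; auto.
Qed.

Lemma FR_lin g1 g2 (k1 k2 : C) xi t : DC2 g1 t -> DC2 g2 t ->
  FR (fun t x => k1 * g1 t x + k2 * g2 t x)%C xi t = (k1 * FR g1 xi t + k2 * FR g2 xi t)%C.
Proof.
  intros D1 D2.
  pose proof (DC2_hre g1 xi t D1). pose proof (DC2_him g1 xi t D1).
  pose proof (DC2_hre g2 xi t D2). pose proof (DC2_him g2 xi t D2).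
  unfold FR. apply injective_projections; simpl.
  - rewrite (TI_ext _ (fun x => 1 * (fst k1 * Hre (fun t x => fst (g1 t x)) (fun t x => snd (g1 t x)) xi t x
        + (- snd k1) * Him (fun t x => fst (g1 t x)) (fun t x => snd (g1 t x)) xi t x)
      + 1 * (fst k2 * Hre (fun t x => fst (g2 t x)) (fun t x => snd (g2 t x)) xi t x
        + (- snd k2) * Him (fun t x => fst (g2 t x)) (fun t x => snd (g2 t x)) xi t x))).
    rewrite TI_lin, !TI_lin; auto; try ring; apply DecayC_plus; apply DecayC_scal; auto.
    intros; unfold Hre, Him; simpl; ring.
  - rewrite (TI_ext _ (fun x => 1 * (fst k1 * Him (fun t x => fst (g1 t x)) (fun t x => snd (g1 t x)) xi t x
        + snd k1 * Hre (fun t x => fst (g1 t x)) (fun t x => snd (g1 t x)) xi t x)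
      + 1 * (fst k2 * Him (fun t x => fst (g2 t x)) (fun t x => snd (g2 t x)) xi t x
        + snd k2 * Hre (fun t x => fst (g2 t x)) (fun t x => snd (g2 t x)) xi t x))).
    rewrite TI_lin, !TI_lin; auto; try ring; apply DecayC_plus; apply DecayC_scal; auto.
    intros; unfold Hre, Him; simpl; ring.
Qed.


Lemma Sch_DC2 f a b t : Schwartz f -> DC2 (DtxC a b f) t.
Proof. intros Sf. destruct (Sch_nice f a b Sf) as [N1 N2]. split; apply Nice2_DecayC; auto. Qed.

Lemma Sch_DC2_0 f t : Schwartz f -> DC2 f t.
Proof. intros Sf. apply (Sch_DC2 f 0 0 t Sf). Qed.

Lemma Sch_FR_per f xi t : Schwartz f -> FR f xi (t + 2 * PI) = FR f xi t.
Proof.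
  intros [P _]. unfold FR. f_equal; apply TI_ext; intros; unfold Hre, Him; rewrite P; auto.
Qed.

Lemma Sch_smooth f xi : Schwartz f -> smooth1 (fun t => fst (FR f xi t)) /\ smooth1 (fun t => snd (FR f xi t)).
Proof.
  intros Sf. split; intros n t; destruct (Sch_F f xi Sf n t) as [[A _] [B _]]; auto.
Qed.

Lemma Sch_Cinf f xi : Schwartz f -> Cinf_T1 (fun t => fourier_x f t xi).
Proof.
  intros Sf. split; [|split].
  - intro t. rewrite !fourier_FR by (apply Sch_DC2_0; auto). apply Sch_FR_per; auto.
  - eapply smooth_ext, (proj1 (Sch_smooth f xi Sf)). intros; unfold reC. rewrite fourier_FR by (apply Sch_DC2_0; auto). auto.
  - eapply smooth_ext, (proj2 (Sch_smooth f xi Sf)). intros; unfold imC. rewrite fourier_FR by (apply Sch_DC2_0; auto). auto.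
Qed.

Lemma Sch_deriv f xi t : Schwartz f ->
  CD (FR f xi) t (FR (DtxC 1 0 f) xi t).
Proof.
  intros Sf. destruct (Sch_F f xi Sf 1 t) as [[A1 A2] [B1 B2]]. split.
  - eapply isR_val1. apply Derive_correct, A1. exact A2.
  - eapply isR_val1. apply Derive_correct, B1. exact B2.
Qed.

Lemma Sch_deriv_cont f xi t : Schwartz f ->
  continuous (fun t => fst (FR (DtxC 1 0 f) xi t)) t /\ continuous (fun t => snd (FR (DtxC 1 0 f) xi t)) t.
Proof.
  intros Sf. destruct (Sch_F f xi Sf 2 t) as [[A1 _] [B1 _]]. split.
  - apply contR_ext with (Derive_n (fun t => TI (Hre (R0 f) (I0 f) xi t)) 1).
    intros s. destruct (Sch_F f xi Sf 1 s) as [[_ E] _]. rewrite E. reflexivity.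
    apply (@ex_derive_continuous R_AbsRing R_NormedModule). apply A1.
  - apply contR_ext with (Derive_n (fun t => TI (Him (R0 f) (I0 f) xi t)) 1).
    intros s. destruct (Sch_F f xi Sf 1 s) as [_ [_ E]]. rewrite E. reflexivity.
    apply (@ex_derive_continuous R_AbsRing R_NormedModule). apply B1.
Qed.

Lemma ibp (Psi D1 D2 : R -> R) (k : R) : (forall x, is_derive Psi x (D1 x + k * D2 x)) ->
  DecayC Psi -> DecayC D1 -> DecayC D2 -> TI D1 + k * TI D2 = 0.
Proof.
  intros HD [CP [MP DP]] DC1 DC2.
  assert (E1 : is_RInt_gen (Derive Psi) (Rbar_locally m_infty) (Rbar_locally p_infty) (0 - 0)).
  { apply is_RInt_gen_Derive; try apply Rbar_locally_filter.
    - apply filter_forall. intros ab x _. eexists; apply HD.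
    - apply filter_forall. intros ab x _. apply contR_ext with (fun x => D1 x + k * D2 x).
      intros; symmetry; apply is_derive_unique, HD.
      apply contR_plus. apply DC1. apply contR_mult. apply contR_const. apply DC2.
    - eapply decay_lim_m; eauto.
    - eapply decay_lim_p; eauto. }
  assert (E2 : is_RInt_gen (Derive Psi) (Rbar_locally m_infty) (Rbar_locally p_infty) (TI D1 + k * TI D2)).
  { apply is_RInt_gen_ext with (fun x => plus (D1 x) (scal k (D2 x))); try apply Rbar_locally_filter.
    apply filter_forall. intros ab x _. symmetry; apply is_derive_unique, HD.
    apply (is_RInt_gen_plus (V := R_NormedModule)); try apply Rbar_locally_filter.
    apply IGD; auto.
    apply (is_RInt_gen_scal (V := R_NormedModule)); try apply Rbar_locally_filter.
    apply IGD; auto. }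
  apply (is_RInt_gen_unique (V := R_CompleteNormedModule)) in E1; try (apply Proper_StrongProper, Rbar_locally_filter).
  apply (is_RInt_gen_unique (V := R_CompleteNormedModule)) in E2; try (apply Proper_StrongProper, Rbar_locally_filter).
  rewrite E1 in E2. simpl in E2. lra.
Qed.

Lemma isR_lin (xi x : R) : is_derive (fun y => y * xi) x xi.
Proof. auto_derive; auto; ring. Qed.

Lemma Sch_Dx f xi t : Schwartz f ->
  FR (DtxC 0 1 f) xi t = (- xi * snd (FR f xi t), xi * fst (FR f xi t)).
Proof.
  intros Sf. pose proof Sf as [_ [S1 [S2 _]]].
  assert (XR : forall x, is_derive (fun y => R0 f t y) x (Defs.Dx (R0 f) t x)).
  { intro x. apply Derive_correct. apply (proj2 (proj2 (S1 nil))). }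
  assert (XI : forall x, is_derive (fun y => I0 f t y) x (Defs.Dx (I0 f) t x)).
  { intro x. apply Derive_correct. apply (proj2 (proj2 (S2 nil))). }
  assert (XC : forall x, is_derive (fun y => cos (y * xi)) x (xi * - sin (x * xi))).
  { intro x. apply (isR_comp cos (fun y => y * xi)). apply is_derive_cos. apply isR_lin. }
  assert (XS : forall x, is_derive (fun y => sin (y * xi)) x (xi * cos (x * xi))).
  { intro x. apply (isR_comp sin (fun y => y * xi)). apply is_derive_sin. apply isR_lin. }
  pose proof (Sch_DC2_0 f t Sf) as D0. pose proof (Sch_DC2 f 0 1 t Sf) as D1.
  pose proof (DC2_hre _ xi _ D0) as H0. pose proof (DC2_him _ xi _ D0) as K0.
  pose proof (DC2_hre _ xi _ D1) as H1. pose proof (DC2_him _ xi _ D1) as K1.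
  assert (A : TI (Hre (fun t x => fst (DtxC 0 1 f t x)) (fun t x => snd (DtxC 0 1 f t x)) xi t)
     + xi * TI (Him (fun t x => fst (f t x)) (fun t x => snd (f t x)) xi t) = 0).
  { apply (ibp (Hre (fun t x => fst (f t x)) (fun t x => snd (f t x)) xi t)); auto.
    intro x. eapply isR_val1. apply isR_plus; apply isR_mult; auto.
    unfold Hre, Him, R0, I0. simpl. match goal with |- ?a = ?b => change (@eq R a b) end; ring. }
  assert (B : TI (Him (fun t x => fst (DtxC 0 1 f t x)) (fun t x => snd (DtxC 0 1 f t x)) xi t)
     + (- xi) * TI (Hre (fun t x => fst (f t x)) (fun t x => snd (f t x)) xi t) = 0).
  { apply (ibp (Him (fun t x => fst (f t x)) (fun t x => snd (f t x)) xi t)); auto.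
    intro x. eapply isR_val1. apply isR_minus; apply isR_mult; auto.
    unfold Hre, Him, R0, I0. simpl. match goal with |- ?a = ?b => change (@eq R a b) end; ring. }
  unfold FR. apply injective_projections; cbn [fst snd]; nra.
Qed.


Ltac rring := cbv beta; match goal with |- ?a = ?b => change (@eq R a b) end; ring.

Definition vv c q xi (g : R -> R -> C) : C := Jf c q xi (fun t => fourier_x g t xi) (2 * PI).

Lemma exR_lin (f g : R -> R) al be a b : ex_RInt f a b -> ex_RInt g a b -> ex_RInt (fun y => al * f y + be * g y) a b.
Proof.
  intros. apply (ex_RInt_plus (V := R_CompleteNormedModule) (fun y => scal al (f y)) (fun y => scal be (g y)));
  apply (ex_RInt_scal (V := R_CompleteNormedModule)); auto.
Qed.

Lemma RInt_lin4 (f1 f2 f3 f4 : R -> R) a1 a2 a3 a4 a b :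
  ex_RInt f1 a b -> ex_RInt f2 a b -> ex_RInt f3 a b -> ex_RInt f4 a b ->
  RInt (fun y => a1 * f1 y + a2 * f2 y + (a3 * f3 y + a4 * f4 y)) a b =
  a1 * RInt f1 a b + a2 * RInt f2 a b + (a3 * RInt f3 a b + a4 * RInt f4 a b).
Proof.
  intros X1 X2 X3 X4.
  rewrite (RInt_ext _ (fun y => 1 * (a1 * f1 y + a2 * f2 y) + 1 * (a3 * f3 y + a4 * f4 y)))
    by (intros; rring).
  rewrite RInt_lin_gen by (apply exR_lin; auto).
  rewrite !RInt_lin_gen by auto. rring.
Qed.

Section Main.
Variables (c : R -> C) (q : C) (xi : R).
Hypothesis Hc : Cinf_T1 c.

Lemma exEF g : Schwartz g -> ex_RInt (fun s => fst (EE c q xi s * fourier_x g s xi)%C) 0 (2 * PI) /\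
  ex_RInt (fun s => snd (EE c q xi s * fourier_x g s xi)%C) 0 (2 * PI).
Proof.
  intros Sg. split; apply exR_cont; intros;
  [apply (EF_cont1 c q xi (fun s => fourier_x g s xi) Hc (Sch_Cinf g xi Sg))
  |apply (EF_cont2 c q xi (fun s => fourier_x g s xi) Hc (Sch_Cinf g xi Sg))].
Qed.

Lemma v_lin : linear_on_S (vv c q xi).
Proof.
  intros g h a b Sg Sh.
  assert (FH : forall s, fourier_x (fun t x => a * g t x + b * h t x)%C s xi =
     (a * fourier_x g s xi + b * fourier_x h s xi)%C).
  { intro s. rewrite (fourier_FR (fun t x => a * g t x + b * h t x)%C) by (apply DC2_lin; apply Sch_DC2_0; auto).
    rewrite (fourier_FR g), (fourier_FR h) by (apply Sch_DC2_0; auto).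
    apply FR_lin; apply Sch_DC2_0; auto. }
  destruct (exEF g Sg) as [G1 G2]. destruct (exEF h Sh) as [K1 K2].
  unfold vv, Jf. apply injective_projections.
  - cbn [fst]. rewrite (RInt_ext _ (fun s =>
      fst a * fst (EE c q xi s * fourier_x g s xi)%C + (- snd a) * snd (EE c q xi s * fourier_x g s xi)%C +
      (fst b * fst (EE c q xi s * fourier_x h s xi)%C + (- snd b) * snd (EE c q xi s * fourier_x h s xi)%C))).
    rewrite RInt_lin4 by auto. simpl. ring.
    intros s _. rewrite FH. simpl. ring.
  - cbn [snd]. rewrite (RInt_ext _ (fun s =>
      fst a * snd (EE c q xi s * fourier_x g s xi)%C + snd a * fst (EE c q xi s * fourier_x g s xi)%C +
      (fst b * snd (EE c q xi s * fourier_x h s xi)%C + snd b * fst (EE c q xi s * fourier_x h s xi)%C))).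
    rewrite RInt_lin4 by auto. simpl. ring.
    intros s _. rewrite FH. simpl. ring.
Qed.

Lemma Decay_Hre_expl (A B : R -> R -> R) t Ma Mb :
  Decay (A t) Ma -> Decay (B t) Mb -> Decay (Hre A B xi t) (Ma + Mb) /\ Decay (Him A B xi t) (Ma + Mb).
Proof.
  intros DA DB. split; intro x; specialize (DA x); specialize (DB x); unfold Hre, Him;
  assert (P0 : 0 <= (1 + x ^ 2) ^ 2) by (apply pow_le; nra);
  pose proof (abs_cos_le (x * xi)); pose proof (abs_sin_le (x * xi));
  pose proof (Rabs_pos (A t x)); pose proof (Rabs_pos (B t x));
  pose proof (Rabs_pos (cos (x * xi))); pose proof (Rabs_pos (sin (x * xi))).
  - pose proof (Rabs_triang (A t x * cos (x * xi)) (B t x * sin (x * xi))). rewrite !Rabs_mult in H5.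
    assert (Rabs (A t x) * Rabs (cos (x * xi)) <= Rabs (A t x)) by nra.
    assert (Rabs (B t x) * Rabs (sin (x * xi)) <= Rabs (B t x)) by nra. nra.
  - unfold Rminus. pose proof (Rabs_triang (B t x * cos (x * xi)) (- (A t x * sin (x * xi)))).
    rewrite Rabs_Ropp, !Rabs_mult in H5.
    assert (Rabs (B t x) * Rabs (cos (x * xi)) <= Rabs (B t x)) by nra.
    assert (Rabs (A t x) * Rabs (sin (x * xi)) <= Rabs (A t x)) by nra. nra.
Qed.

Lemma FR_bound g M : Schwartz g ->
  (forall a b gg : nat, (a <= 4)%nat -> (b <= 4)%nat -> (gg <= 4)%nat ->
    forall t x : R, Rabs (x ^ gg) * Cmod (DtxC a b g t x) <= M) ->
  forall t, Rabs (fst (FR g xi t)) <= PI * (8 * M) /\ Rabs (snd (FR g xi t)) <= PI * (8 * M).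
Proof.
  intros Sg HB t.
  assert (B0 : forall x, Cmod (DtxC 0 0 g t x) <= M).
  { intro x. specialize (HB 0%nat 0%nat 0%nat ltac:(lia) ltac:(lia) ltac:(lia) t x). simpl in HB.
    rewrite Rabs_R1, Rmult_1_l in HB. auto. }
  assert (B4 : forall x, Rabs (x ^ 4) * Cmod (DtxC 0 0 g t x) <= M).
  { intro x. apply (HB 0%nat 0%nat 4%nat ltac:(lia) ltac:(lia) ltac:(lia) t x). }
  assert (D1 : Decay (fun x => fst (g t x)) (2 * M + 2 * M)).
  { apply decay_from_bounds; intro x.
    eapply Rle_trans, B0. apply (fst_le_Cmod (DtxC 0 0 g t x)).
    eapply Rle_trans, B4. apply Rmult_le_compat_l. apply Rabs_pos. apply (fst_le_Cmod (DtxC 0 0 g t x)). }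
  assert (D2 : Decay (fun x => snd (g t x)) (2 * M + 2 * M)).
  { apply decay_from_bounds; intro x.
    eapply Rle_trans, B0. apply (im_le_Cmod (DtxC 0 0 g t x)).
    eapply Rle_trans, B4. apply Rmult_le_compat_l. apply Rabs_pos. apply (im_le_Cmod (DtxC 0 0 g t x)). }
  destruct (Decay_Hre_expl (fun t x => fst (g t x)) (fun t x => snd (g t x)) t _ _ D1 D2) as [E1 E2].
  pose proof (Sch_DC2_0 g t Sg) as DC.
  replace (8 * M) with (2 * M + 2 * M + (2 * M + 2 * M)) by ring.
  split; apply TI_bound; auto; [apply DC2_hre|apply DC2_him]; auto.
Qed.

Lemma E_bound : exists B, 0 <= B /\ forall t, 0 <= t <= 2 * PI ->
  Rabs (fst (EE c q xi t)) <= B /\ Rabs (snd (EE c q xi t)) <= B.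
Proof.
  destruct (continuity_ab_maj (fun t => Rabs (fst (EE c q xi t)) + Rabs (snd (EE c q xi t))) 0 (2 * PI))
    as [Mx [HM _]].
  pose proof PI_RGT_0; lra.
  intros t _. apply continuity_pt_filterlim.
  assert (HH : continuous (fun t => Rabs (fst (EE c q xi t)) + Rabs (snd (EE c q xi t))) t). 2: exact HH.
  apply contR_plus.
  apply (continuous_Rabs_comp (fun t => fst (EE c q xi t))). apply (CD_cont1 _ t _ (CD_EE c q xi Hc t)).
  apply (continuous_Rabs_comp (fun t => snd (EE c q xi t))). apply (CD_cont2 _ t _ (CD_EE c q xi Hc t)).
  exists (Rabs (fst (EE c q xi Mx)) + Rabs (snd (EE c q xi Mx))). split.
  pose proof (Rabs_pos (fst (EE c q xi Mx))); pose proof (Rabs_pos (snd (EE c q xi Mx))); lra.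
  intros t Ht. specialize (HM t Ht).
  pose proof (Rabs_pos (fst (EE c q xi t))); pose proof (Rabs_pos (snd (EE c q xi t))). lra.
Qed.

Lemma Cmod_le2 (z : C) K : Rabs (fst z) <= K -> Rabs (snd z) <= K -> Cmod z <= 2 * K.
Proof.
  intros H1 H2. eapply Rle_trans. apply Cmod_2Rmax.
  assert (S : sqrt 2 <= 2). { pose proof (sqrt_pos 2). pose proof (sqrt_sqrt 2 ltac:(lra)). nra. }
  assert (Rmax (Rabs (fst z)) (Rabs (snd z)) <= K) by (apply Rmax_lub; auto).
  pose proof (Rmax_l (Rabs (fst z)) (Rabs (snd z))). pose proof (Rabs_pos (fst z)).
  pose proof (sqrt_pos 2). nra.
Qed.

Lemma v_cont : continuous_on_S (vv c q xi).
Proof.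
  destruct E_bound as [B [B0 HB]].
  exists 4%nat, (2 * (2 * PI * (2 * B * (PI * 8)))).
  intros g M Sg HM.
  assert (M0 : 0 <= M).
  { eapply Rle_trans, (HM 0%nat 0%nat 0%nat ltac:(lia) ltac:(lia) ltac:(lia) 0 0). apply Rmult_le_pos; apply Rabs_pos || apply Cmod_ge_0. }
  pose proof (FR_bound g M Sg HM) as FB. pose proof PI_RGT_0.
  destruct (exEF g Sg) as [X1 X2].
  replace (2 * (2 * PI * (2 * B * (PI * 8))) * M) with (2 * ((2 * PI - 0) * (2 * B * (PI * (8 * M))))) by ring.
  apply Cmod_le2; unfold vv, Jf; cbn [fst snd]; apply abs_RInt_le_const; auto; try lra;
  intros t Ht; rewrite fourier_FR by (apply Sch_DC2_0; auto);
  destruct (HB t Ht) as [E1 E2]; destruct (FB t) as [F1 F2];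
  pose proof (Rabs_pos (fst (FR g xi t))); pose proof (Rabs_pos (snd (FR g xi t)));
  pose proof (Rabs_pos (fst (EE c q xi t))); pose proof (Rabs_pos (snd (EE c q xi t))); cbn [Cmult fst snd].
  - unfold Rminus. eapply Rle_trans. apply Rabs_triang. rewrite Rabs_Ropp, !Rabs_mult.
    assert (Rabs (fst (EE c q xi t)) * Rabs (fst (FR g xi t)) <= B * (PI * (8 * M))) by (apply Rmult_le_compat; auto).
    assert (Rabs (snd (EE c q xi t)) * Rabs (snd (FR g xi t)) <= B * (PI * (8 * M))) by (apply Rmult_le_compat; auto).
    lra.
  - eapply Rle_trans. apply Rabs_triang. rewrite !Rabs_mult.
    assert (Rabs (fst (EE c q xi t)) * Rabs (snd (FR g xi t)) <= B * (PI * (8 * M))) by (apply Rmult_le_compat; auto).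
    assert (Rabs (snd (EE c q xi t)) * Rabs (fst (FR g xi t)) <= B * (PI * (8 * M))) by (apply Rmult_le_compat; auto).
    lra.
Qed.

End Main.


Lemma DC2_ext g g' t : (forall x, g t x = g' t x) -> DC2 g t -> DC2 g' t.
Proof.
  intros E [A B]. split.
  - eapply DecayC_ext, A. intros; simpl; rewrite E; auto.
  - eapply DecayC_ext, B. intros; simpl; rewrite E; auto.
Qed.

Section Ker.
Variables (c : R -> C) (q : C) (xi : R).
Hypothesis Hc : Cinf_T1 c.

Lemma EE_smooth : smooth1 (fun t => fst (EE c q xi t)) /\ smooth1 (fun t => snd (EE c q xi t)).
Proof.
  apply (boot2 _ _ (fun _ => 0) (fun _ => 0) (ar c q xi) (fun t => - ai c q xi t) (ai c q xi) (ar c q xi)).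
  - apply smooth_const.
  - apply smooth_const.
  - apply ar_smooth; auto.
  - apply smooth_ext with (fun t => (-1) * ai c q xi t). intros; ring.
    apply smooth_mult. apply smooth_const. apply ai_smooth; auto.
  - apply ai_smooth; auto.
  - apply ar_smooth; auto.
  - intro t. destruct (CD_EE c q xi Hc t) as [H1 H2]. eapply isR_val1. apply H1. unfold aC; simpl. ring.
  - intro t. destruct (CD_EE c q xi Hc t) as [H1 H2]. eapply isR_val1. apply H2. unfold aC; simpl. ring.
Qed.

Lemma RInt_pointR (f : R -> R) a : RInt f a a = 0.
Proof. apply (RInt_point (V := R_CompleteNormedModule)). Qed.

Lemma EE_0 : EE c q xi 0 = 1%C.
Proof.
  unfold EE, Aa. rewrite !RInt_pointR.
  unfold cexp. apply injective_projections; simpl; rewrite ?exp_0, ?cos_0, ?sin_0; ring.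
Qed.

Lemma FL phi s : Schwartz phi ->
  fourier_x (Lop c q phi) s xi = (FR (DtxC 1 0 phi) xi s + aC c q xi s * FR phi xi s)%C.
Proof.
  intros Sp.
  assert (E : forall x, Lop c q phi s x =
     (fun t x => 1 * DtxC 1 0 phi t x + 1 * ((fun t x => c s * DtxC 0 1 phi t x + q * phi t x) t x))%C s x).
  { intro x. unfold Lop. cbv beta. ring. }
  assert (D : DC2 (fun t x => 1 * DtxC 1 0 phi t x + 1 * ((fun t x => c s * DtxC 0 1 phi t x + q * phi t x) t x))%C s).
  { apply DC2_lin. apply Sch_DC2; auto. apply DC2_lin. apply Sch_DC2; auto. apply Sch_DC2_0; auto. }
  rewrite fourier_FR. 2: { eapply DC2_ext, D. intros; symmetry; apply E. }
  rewrite (FR_ext _ _ xi s E).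
  rewrite FR_lin. 2: apply Sch_DC2; auto.
  2: { apply DC2_lin. apply Sch_DC2; auto. apply Sch_DC2_0; auto. }
  rewrite FR_lin. 2: apply Sch_DC2; auto. 2: apply Sch_DC2_0; auto.
  rewrite Sch_Dx by auto.
  unfold aC, ar, ai. apply injective_projections; cbn [fst snd Cmult Cplus RtoC Copp Cminus]; ring.
Qed.

Lemma v_ker : cexp (- Aa c q xi (2 * PI)) = 1%C -> in_ker_Lt c q (vv c q xi).
Proof.
  intros Hres phi Sp.
  assert (EP : EE c q xi (2 * PI) = 1%C).
  { pose proof (cexp_inv (Aa c q xi (2 * PI))) as H. rewrite Hres in H. unfold EE. rewrite <- H. ring. }
  destruct (Sch_smooth phi xi Sp) as [P1 P2]. destruct EE_smooth as [Q1 Q2].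
  assert (CDp : forall s, CD (fun s => EE c q xi s * FR phi xi s)%C s
      (EE c q xi s * fourier_x (Lop c q phi) s xi)%C).
  { intro s. eapply CD_val, CD_mult. 2: apply CD_EE; auto. 2: apply Sch_deriv; auto.
    rewrite FL by auto. ring. }
  assert (Sm1 : smooth1 (fun s => fst (EE c q xi s * FR phi xi s)%C)).
  { apply smooth_ext with (fun s => fst (EE c q xi s) * fst (FR phi xi s) - snd (EE c q xi s) * snd (FR phi xi s)).
    intros; reflexivity. apply smooth_minus; apply smooth_mult; auto. }
  assert (Sm2 : smooth1 (fun s => snd (EE c q xi s * FR phi xi s)%C)).
  { apply smooth_ext with (fun s => fst (EE c q xi s) * snd (FR phi xi s) + snd (EE c q xi s) * fst (FR phi xi s)).
    intros; reflexivity. apply smooth_plus; apply smooth_mult; auto. }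
  assert (PER : FR phi xi (2 * PI) = FR phi xi 0).
  { rewrite <- (Sch_FR_per phi xi 0 Sp). f_equal. ring. }
  assert (V : (EE c q xi (2 * PI) * FR phi xi (2 * PI))%C = (EE c q xi 0 * FR phi xi 0)%C).
  { rewrite EP, EE_0, PER. auto. }
  unfold vv, Jf. apply injective_projections; cbn [fst snd].
  - rewrite (RInt_ext _ (Derive (fun s => fst (EE c q xi s * FR phi xi s)%C))).
    rewrite RInt_Derive. rewrite V. cbn [fst snd RtoC]. ring.
    intros; apply smooth_ex_derive; auto. intros; apply smooth_cont, smooth_Derive; auto.
    intros s _. symmetry. apply is_derive_unique, (CDp s).
  - rewrite (RInt_ext _ (Derive (fun s => snd (EE c q xi s * FR phi xi s)%C))).
    rewrite RInt_Derive. rewrite V. cbn [fst snd RtoC]. ring.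
    intros; apply smooth_ex_derive; auto. intros; apply smooth_cont, smooth_Derive; auto.
    intros s _. symmetry. apply is_derive_unique, (CDp s).
Qed.

End Ker.

Theorem lemma5p2 (c : R -> C) (q : C) (f : R -> R -> C) :
  Cinf_T1 c ->
  annihilator_ker_Lt c q f ->
  forall xi : R, exists w : R -> C,
    Cinf_T1 w /\
    forall t : R,
      (Cderive w t + Ci * (RtoC xi * c t - Ci * q) * w t)%C = fourier_x f t xi.
Proof.
  intros Hc [Sf Hf] xi.
  pose proof (Sch_Cinf f xi Sf) as HF.
  destruct (choose_w0 (cexp (- Aa c q xi (2 * PI))) (Jf c q xi (fun t => fourier_x f t xi) (2 * PI))) as [w0 Hw0].
  - intro Hres. apply (Hf (vv c q xi)).
    + split. apply v_lin; auto. apply v_cont; auto.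
    + apply v_ker; auto.
  - apply (ode_sol c q xi (fun t => fourier_x f t xi) Hc HF w0 Hw0).
Qed.
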